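(* Let $\triangle PQR$ be a (closed, filled) triangle in $D$, and let $S$ be the point on the hyperbolic line $PQ$ such that the hyperbolic line $RS$ is perpendicular (in the hyperbolic sense) to the line $PQ$. Suppose that $\delta(P,Q,R)=\Delta_2'(P,Q)$ and that $S$ lies in the segment $PQ$. Then $\rho(\psi_{\triangle PQR})=\frac{2}{5}$.
   Context: $D$ is the open unit disk in $\mathbb R^2$, $S^1$ its boundary circle identified with $\mathbb R/\mathbb Z$ via the counterclockwise normalized angle. For a closed convex $U\subset D$ and $v\in S^1$, $\psi_U(v)$ is the point $w\in S^1\setminus\{v\}$ such that the line $vw$ meets $U$ and $U$ lies in the closed half-plane to the left of the directed line from $v$ to $w$; it is an orientation-preserving homeomorphism of $S^1$. For such $f$, $\rho(f)=\lim_{n\to\infty}(\overline f^n(x)-x)/n$ with $\overline f$ the lift to $\mathbb R$ satisfying $\overline f(0)\in[0,1)$. Regard $D$ as the Beltrami–Klein model of the hyperbolic plane (hyperbolic lines are chords; angles and perpendicularity refer to this hyperbolic geometry). For distinct $P,Q\in D$ with chord endpoints $v_1,v_2\in S^1$, $d'(P,Q)=\tfrac12\left|\log\frac{|v_1Q||v_2P|}{|v_1P||v_2Q|}\right|$; $\Delta_n'(P,Q)=\log\frac{e^{n d'(P,Q)}+1}{e^{n d'(P,Q)}-1}$ for $n\in\mathbb Z_{>0}$; $\delta(P,Q,R)=\min\{d'(R,S): S \text{ on the chord through } P,Q\}$. *)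

(* Defs.v *)
From Stdlib Require Import Reals.
From Coquelicot Require Import Coquelicot.
Open Scope R_scope.

Definition pt := (R * R)%type.

Definition padd (X Y : pt) : pt := (fst X + fst Y, snd X + snd Y).
Definition psub (X Y : pt) : pt := (fst X - fst Y, snd X - snd Y).
Definition pscal (a : R) (X : pt) : pt := (a * fst X, a * snd X).
Definition dot (X Y : pt) : R := fst X * fst Y + snd X * snd Y.
Definition cross (X Y : pt) : R := fst X * snd Y - snd X * fst Y.
Definition edist (X Y : pt) : R := sqrt (dot (psub X Y) (psub X Y)).

Definition inD (X : pt) : Prop := dot X X < 1.

(* S^1 identified with R/Z via the counterclockwise normalized angle *)
Definition circ (t : R) : pt := (cos (2 * PI * t), sin (2 * PI * t)).

Definition filled_triangle (P Q R0 : pt) (X : pt) : Prop :=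
  exists a b c, 0 <= a /\ 0 <= b /\ 0 <= c /\ a + b + c = 1 /\
    X = padd (pscal a P) (padd (pscal b Q) (pscal c R0)).

Definition collinear (A B C : pt) : Prop := cross (psub B A) (psub C A) = 0.

(* psi_U(v) = w : w in S^1 \ {v}, line vw meets U, U in the closed left
   half-plane of the directed line v -> w *)
Definition psi_rel (U : pt -> Prop) (v w : pt) : Prop :=
  dot w w = 1 /\ w <> v /\
  (exists X, U X /\ collinear v w X) /\
  (forall X, U X -> 0 <= cross (psub w v) (psub X v)).

Definition psi_lift (U : pt -> Prop) (F : R -> R) : Prop :=
  (forall x, continuous F x) /\
  (forall x, psi_rel U (circ x) (circ (F x))) /\
  0 <= F 0 < 1.

Definition rot_number_is (U : pt -> Prop) (r : R) : Prop :=
  (exists F, psi_lift U F) /\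
  (forall F, psi_lift U F -> forall x,
     is_lim_seq (fun n : nat => (Nat.iter n F x - x) / INR n) r).

(* endpoints of the chord through distinct P, Q: P + t (Q - P) with
   |P + t(Q-P)|^2 = 1 *)
Definition chord_endpoint (s : R) (P Q : pt) : pt :=
  let a := dot (psub Q P) (psub Q P) in
  let b := 2 * dot P (psub Q P) in
  let c := dot P P - 1 in
  padd P (pscal ((- b + s * sqrt (b * b - 4 * a * c)) / (2 * a)) (psub Q P)).

Definition v1 (P Q : pt) : pt := chord_endpoint (-1) P Q.
Definition v2 (P Q : pt) : pt := chord_endpoint 1 P Q.

Definition dK (P Q : pt) : R :=
  / 2 * Rabs (ln ((edist (v1 P Q) Q * edist (v2 P Q) P) /
                  (edist (v1 P Q) P * edist (v2 P Q) Q))).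

Definition DeltaK (n : nat) (P Q : pt) : R :=
  ln ((exp (INR n * dK P Q) + 1) / (exp (INR n * dK P Q) - 1)).

Definition on_chord (P Q S : pt) : Prop :=
  inD S /\ exists t, S = padd P (pscal t (psub Q P)).

Definition on_segment (P Q S : pt) : Prop :=
  exists t, 0 <= t <= 1 /\ S = padd P (pscal t (psub Q P)).

Definition delta_is (P Q R0 : pt) (m : R) : Prop :=
  (exists S, on_chord P Q S /\ dK R0 S = m) /\
  (forall S, on_chord P Q S -> m <= dK R0 S).

(* Riemannian metric of the Beltrami-Klein model at X *)
Definition klein_metric (X u v : pt) : R :=
  dot u v / (1 - dot X X) + dot X u * dot X v / ((1 - dot X X) * (1 - dot X X)).

(* the hyperbolic line RS is perpendicular to the hyperbolic line PQ,
   where S lies on the chord PQ (angle measured at the intersection S) *)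
Definition perp_at (P Q R0 S : pt) : Prop :=
  S <> R0 /\ klein_metric S (psub Q P) (psub R0 S) = 0.

(* Main.v *)
Require Import Defs.
From Stdlib Require Import Reals Lra Lia Psatz Nsatz ZArith.
From Coquelicot Require Import Coquelicot.
Open Scope R_scope.

Definition cross3 (A B C : pt) : R := cross (psub B A) (psub C A).

Lemma PI_pos' : 0 < PI. Proof. exact PI_RGT_0. Qed.

Lemma circ_unit x : dot (circ x) (circ x) = 1.
Proof. unfold dot, circ; simpl. pose proof (sin2_cos2 (2*PI*x)). unfold Rsqr in H. lra. Qed.

Lemma circ_period x : circ (x + 1) = circ x.
Proof.
  unfold circ. replace (2 * PI * (x + 1)) with (2*PI*x + 2 * INR 1 * PI) by (simpl; ring).
  rewrite cos_period, sin_period. reflexivity.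
Qed.

Lemma circ_inj a b : Rabs (a - b) < 1 -> circ a = circ b -> a = b.
Proof.
  intros Hab Hc. unfold circ in Hc. injection Hc as Hc1 Hc2.
  set (A := 2*PI*a) in *. set (B := 2*PI*b) in *.
  assert (Hs : sin (A - B) = 0).
  { rewrite sin_minus, Hc1, Hc2. ring. }
  assert (Hco : cos (A - B) = 1).
  { rewrite cos_minus, Hc1, Hc2. pose proof (sin2_cos2 B). unfold Rsqr in H. lra. }
  destruct (sin_eq_0_0 _ Hs) as [k Hk].
  assert (Hk2 : IZR k = 2 * (a - b)).
  { apply Rmult_eq_reg_r with PI. 2: apply Rgt_not_eq, PI_RGT_0.
    rewrite <- Hk. unfold A, B. ring. }
  apply Rabs_def2 in Hab. destruct Hab as [H1 H2].
  assert (k1 : (k < 2)%Z) by (apply lt_IZR; lra).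
  assert (k2 : (-2 < k)%Z) by (apply lt_IZR; lra).
  assert (Hk3 : (k = -1 \/ k = 0 \/ k = 1)%Z) by lia.
  destruct Hk3 as [E|[E|E]]; subst k.
  - rewrite Hk in Hco. replace (IZR (-1) * PI) with (- PI) in Hco by (simpl; ring).
    rewrite cos_neg, cos_PI in Hco. lra.
  - simpl in Hk2. lra.
  - rewrite Hk in Hco. replace (IZR 1 * PI) with PI in Hco by (simpl; ring).
    rewrite cos_PI in Hco. lra.
Qed.

Lemma circ_surj w : dot w w = 1 -> exists x, circ x = w.
Proof.
  destruct w as [a b]. unfold dot; simpl. intros H.
  assert (Ha : -1 <= a <= 1) by (split; nra).
  assert (Hs : sqrt (1 - a²) = Rabs b).
  { rewrite <- sqrt_Rsqr_abs. f_equal. unfold Rsqr. lra. }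
  destruct (Rle_or_lt 0 b) as [Hb|Hb].
  - exists (acos a / (2*PI)). unfold circ.
    replace (2 * PI * (acos a / (2 * PI))) with (acos a) by (field; apply Rgt_not_eq, PI_RGT_0).
    rewrite cos_acos by lra. rewrite sin_acos by lra. rewrite Hs, Rabs_right by lra. reflexivity.
  - exists (- acos a / (2*PI)). unfold circ.
    replace (2 * PI * (- acos a / (2 * PI))) with (- acos a) by (field; apply Rgt_not_eq, PI_RGT_0).
    rewrite cos_neg, sin_neg, cos_acos by lra. rewrite sin_acos by lra. rewrite Hs, Rabs_left by lra.
    f_equal; ring.
Qed.

Ltac clear_noneq := repeat match goal with
  | H : ?P |- _ => match type of P with Prop => lazymatch P with @eq R _ _ => fail | _ => clear H end end end.
Ltac nsat := clear_noneq; cbn [pow] in *; nsatz.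
Definition tY (v Y : pt) : R := cross v Y / (dot v Y - 1).
Definition psi_w (v : pt) (m : R) : pt :=
  let c := (m*m-1)/(m*m+1) in let s := -2*m/(m*m+1) in
  (c*fst v - s*snd v, c*snd v + s*fst v).

Lemma cos_2atan m : cos (2 * atan m) = (1 - m*m)/(1 + m*m).
Proof.
  assert (Hr : 0 < sqrt (1 + m²)) by (apply sqrt_lt_R0; unfold Rsqr; nra).
  assert (Hr2 : sqrt (1 + m²) * sqrt (1 + m²) = 1 + m*m) by (rewrite sqrt_sqrt; unfold Rsqr; nra).
  rewrite cos_2a, cos_atan, sin_atan. set (r := sqrt (1 + m²)) in *.
  replace (1 / r * (1 / r)) with (/ (r*r)) by (field; lra); replace (m / r * (m / r)) with (m*m / (r*r)) by (field; lra); rewrite Hr2; field; nra.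
Qed.
Lemma sin_2atan m : sin (2 * atan m) = 2*m/(1 + m*m).
Proof.
  assert (Hr : 0 < sqrt (1 + m²)) by (apply sqrt_lt_R0; unfold Rsqr; nra).
  assert (Hr2 : sqrt (1 + m²) * sqrt (1 + m²) = 1 + m*m) by (rewrite sqrt_sqrt; unfold Rsqr; nra).
  rewrite sin_2a, cos_atan, sin_atan. set (r := sqrt (1 + m²)) in *.
  replace (2 * (m / r) * (1 / r)) with (2*m / (r*r)) by (field; lra); rewrite Hr2; field; nra.
Qed.

Lemma circ_shift_atan x m : circ (x + /2 + atan m / PI) = psi_w (circ x) m.
Proof.
  unfold circ, psi_w; simpl.
  assert (HP := PI_RGT_0).
  replace (2 * PI * (x + / 2 + atan m / PI)) with ((2*PI*x + PI) + 2 * atan m) by (field; lra).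
  assert (E1 : cos (2*PI*x + PI) = - cos (2*PI*x)) by (rewrite cos_plus, cos_PI, sin_PI; ring).
  assert (E2 : sin (2*PI*x + PI) = - sin (2*PI*x)) by (rewrite sin_plus, cos_PI, sin_PI; ring).
  rewrite (cos_plus (2*PI*x+PI)), (sin_plus (2*PI*x+PI)), E1, E2, cos_2atan, sin_2atan.
  assert (0 < m*m+1) by nra.
  set (C := cos (2*PI*x)). set (S := sin (2*PI*x)).
  f_equal.
  - field. lra.
  - field. lra.
Qed.
Lemma psi_w_unit v m : dot v v = 1 -> dot (psi_w v m) (psi_w v m) = 1.
Proof.
  destruct v as [a b]; unfold dot, psi_w; simpl; intro H.
  assert (0 < m*m+1) by nra.
  set (c := (m*m-1)/(m*m+1)). set (s := -2*m/(m*m+1)).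
  transitivity ((c*c+s*s)*(a*a+b*b)); [ring|]. rewrite H.
  unfold c, s. field. lra.
Qed.

Lemma psi_w_neq v m : dot v v = 1 -> psi_w v m <> v.
Proof.
  intros H E.
  assert (0 < m*m+1) by nra.
  assert (dot v (psi_w v m) = (m*m-1)/(m*m+1)).
  { destruct v as [a b]; unfold dot, psi_w in *; simpl in *.
    transitivity ((m*m-1)/(m*m+1) * (a*a+b*b)); [field; lra | rewrite H; ring]. }
  rewrite E, H in H1. apply (Rmult_eq_compat_r (m*m+1)) in H1.
  unfold Rdiv in H1. rewrite Rmult_assoc, Rinv_l in H1 by lra. lra.
Qed.

Lemma dot_lt1 v Y : dot v v = 1 -> inD Y -> dot v Y < 1.
Proof.
  destruct v as [a b], Y as [y1 y2]; unfold inD, dot; simpl. intros H1 H2.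
  assert (0 <= (a*y2 - b*y1)^2) by apply pow2_ge_0.
  assert (E : (a*y1+b*y2)^2 + (a*y2 - b*y1)^2 = (a*a+b*b)*(y1*y1+y2*y2)) by ring.
  rewrite H1 in E. assert ((a*y1+b*y2)^2 < 1) by lra. nra.
Qed.

Lemma cross_psi v m Y : dot v v = 1 -> dot v Y - 1 <> 0 ->
  cross (psub (psi_w v m) v) (psub Y v) = 2*(dot v Y - 1)*(m - tY v Y)/(m*m+1).
Proof.
  destruct v as [a b], Y as [y1 y2]; unfold tY, psi_w; unfold dot, cross, psub; simpl. intros H1 H2.
  assert (0 < m*m+1) by nra.
  field_simplify_eq; [clear H2 H; cbn [pow]; nsatz | lra].

Qed.
Definition FY (Y : pt) (x : R) : R := x + /2 + atan (tY (circ x) Y) / PI.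
Definition Fx (Y1 Y2 Y3 : pt) (x : R) : R := Rmin (FY Y1 x) (Rmin (FY Y2 x) (FY Y3 x)).

Lemma FY_le Y Y' x : FY Y x <= FY Y' x -> tY (circ x) Y <= tY (circ x) Y'.
Proof.
  unfold FY. intros H. destruct (Rle_or_lt (tY (circ x) Y) (tY (circ x) Y')) as [h|h]; auto.
  apply atan_increasing in h. assert (HP := PI_RGT_0).
  assert (atan (tY (circ x) Y') / PI < atan (tY (circ x) Y) / PI).
  { unfold Rdiv. apply Rmult_lt_compat_r; auto. apply Rinv_0_lt_compat; auto. }
  lra.
Qed.

Definition is_vert (Y1 Y2 Y3 Y : pt) : Prop := Y = Y1 \/ Y = Y2 \/ Y = Y3.

Lemma Fx_min Y1 Y2 Y3 x : exists Y, is_vert Y1 Y2 Y3 Y /\ Fx Y1 Y2 Y3 x = FY Y x /\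
  forall Z, is_vert Y1 Y2 Y3 Z -> tY (circ x) Y <= tY (circ x) Z.
Proof.
  unfold Fx, is_vert.
  apply Rmin_case_strong; intro h1.
  - exists Y1. split; [auto|]. split; [auto|]. intros Z [ -> | [ -> | -> ] ]; [lra| |].
    + apply FY_le. eapply Rle_trans; [apply h1|]. apply Rmin_l.
    + apply FY_le. eapply Rle_trans; [apply h1|]. apply Rmin_r.
  - revert h1. apply Rmin_case_strong; intros h2 h1.
    + exists Y2. split; [auto|]. split; [auto|]. intros Z [ -> | [ -> | -> ] ]; apply FY_le; lra.
    + exists Y3. split; [auto|]. split; [auto|]. intros Z [ -> | [ -> | -> ] ]; apply FY_le; lra.
Qed.

Definition bary (a b c : R) (Y1 Y2 Y3 : pt) : pt := padd (pscal a Y1) (padd (pscal b Y2) (pscal c Y3)).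

Lemma cross_tri v w a b c Y1 Y2 Y3 : a + b + c = 1 ->
  cross (psub w v) (psub (bary a b c Y1 Y2 Y3) v) =
  a * cross (psub w v) (psub Y1 v) + b * cross (psub w v) (psub Y2 v) + c * cross (psub w v) (psub Y3 v).
Proof.
  destruct v, w, Y1, Y2, Y3. unfold bary, cross, psub, padd, pscal; simpl. intros. nsat.
Qed.

Lemma vert_in_tri Y1 Y2 Y3 Y : is_vert Y1 Y2 Y3 Y -> filled_triangle Y1 Y2 Y3 Y.
Proof.
  unfold filled_triangle. intros [ -> | [ -> | -> ] ].
  - exists 1, 0, 0. repeat split; try lra. destruct Y1, Y2, Y3; unfold padd, pscal; simpl; f_equal; ring.
  - exists 0, 1, 0. repeat split; try lra. destruct Y1, Y2, Y3; unfold padd, pscal; simpl; f_equal; ring.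
  - exists 0, 0, 1. repeat split; try lra. destruct Y1, Y2, Y3; unfold padd, pscal; simpl; f_equal; ring.
Qed.

Lemma F_psi_rel Y1 Y2 Y3 x : inD Y1 -> inD Y2 -> inD Y3 ->
  psi_rel (filled_triangle Y1 Y2 Y3) (circ x) (circ (Fx Y1 Y2 Y3 x)).
Proof.
  intros h1 h2 h3.
  destruct (Fx_min Y1 Y2 Y3 x) as [Y [HY [E Hmin]]]. rewrite E. unfold FY. rewrite circ_shift_atan.
  assert (Hv := circ_unit x). set (v := circ x) in *. set (m := tY v Y).
  assert (Hneg : forall Z, is_vert Y1 Y2 Y3 Z -> dot v Z - 1 < 0).
  { intros Z [ -> | [ -> | -> ] ]; [pose proof (dot_lt1 v _ Hv h1)|pose proof (dot_lt1 v _ Hv h2)|pose proof (dot_lt1 v _ Hv h3)]; lra. }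
  assert (Hc : forall Z, is_vert Y1 Y2 Y3 Z -> 0 <= cross (psub (psi_w v m) v) (psub Z v)).
  { intros Z HZ. rewrite cross_psi; auto. 2: specialize (Hneg Z HZ); lra.
    specialize (Hneg Z HZ). specialize (Hmin Z HZ). fold m in Hmin.
    assert (0 < m*m+1) by nra. unfold Rdiv. apply Rmult_le_pos.
    - nra.
    - left. apply Rinv_0_lt_compat. auto. }
  split; [apply psi_w_unit; auto|].
  split; [apply psi_w_neq; auto|].
  split.
  - exists Y. split; [apply vert_in_tri; auto|]. unfold collinear. rewrite cross_psi; auto.
    + unfold m. unfold Rminus at 2. rewrite Rplus_opp_r. unfold Rdiv. ring.
    + specialize (Hneg Y HY). lra.
  - intros X [a [b [c [ha [hb [hc [hs ->]]]]]]]. fold (bary a b c Y1 Y2 Y3).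
    rewrite cross_tri by auto.
    assert (c1 := Hc Y1 (or_introl eq_refl)).
    assert (c2 := Hc Y2 (or_intror (or_introl eq_refl))).
    assert (c3 := Hc Y3 (or_intror (or_intror eq_refl))).
    nra.
Qed.
Lemma dot_unit_lt v w : dot v v = 1 -> dot w w = 1 -> w <> v -> dot v w < 1.
Proof.
  destruct v as [a b], w as [c d]; unfold dot; simpl. intros H1 H2 H3.
  assert (0 < (a-c)^2 + (b-d)^2).
  { destruct (Req_dec a c); destruct (Req_dec b d); subst.
    - exfalso; auto.
    - assert (0 < (b-d)^2) by (apply pow2_gt_0; lra). nra.
    - assert (0 < (a-c)^2) by (apply pow2_gt_0; lra). nra.
    - assert (0 < (a-c)^2) by (apply pow2_gt_0; lra). nra. }
  nra.
Qed.

Definition tauw (v w : pt) : R := cross v w / (dot v w - 1).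

Lemma cross_tau v w Y : dot v v = 1 -> dot w w = 1 -> dot v w - 1 <> 0 -> dot v Y - 1 <> 0 ->
  cross (psub w v) (psub Y v) = (dot v w - 1) * (dot v Y - 1) * (tY v Y - tauw v w).
Proof.
  destruct v as [a b], w as [c d], Y as [y1 y2]. unfold tauw, tY. unfold cross, dot, psub; simpl.
  intros H1 H2 H3 H4.
  field_simplify_eq; [nsat | auto].
Qed.

Lemma w_repr v w : dot v v = 1 -> dot w w = 1 -> w <> v -> w = psi_w v (tauw v w).
Proof.
  intros H1 H2 H3. assert (H4 := dot_unit_lt v w H1 H2 H3).
  revert H1 H2 H3 H4. destruct v as [a b], w as [c d]. unfold psi_w, tauw, cross, dot; simpl.
  intros H1 H2 H3 H4.
  assert (E : (a*d-b*c)^2 = 1 - (a*c+b*d)^2).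
  { transitivity ((a*a+b*b)*(c*c+d*d) - (a*c+b*d)^2); [ring|]. rewrite H1, H2. ring. }
  set (k := a*c+b*d) in *. set (s := a*d-b*c) in *.
  assert (Hd : (s/(k-1))*(s/(k-1)) + 1 = 2/(1-k)).
  { apply Rmult_eq_reg_r with ((k-1)*(k-1)); [|nra].
    field_simplify; try lra. rewrite E. field. lra. }
  set (t := s/(k-1)) in *.
  assert (Ec : (t*t-1)/(t*t+1) = k).
  { replace (t*t-1) with ((t*t+1) - 2) by ring. rewrite Hd. field. lra. }
  assert (Es : -2*t/(t*t+1) = s).
  { rewrite Hd. unfold t. field. lra. }
  rewrite Ec, Es. unfold k, s. f_equal; nsat.
Qed.

Lemma psi_tau Y1 Y2 Y3 v w : inD Y1 -> inD Y2 -> inD Y3 -> dot v v = 1 ->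
  psi_rel (filled_triangle Y1 Y2 Y3) v w ->
  (forall Z, is_vert Y1 Y2 Y3 Z -> tauw v w <= tY v Z) /\
  (exists Z, is_vert Y1 Y2 Y3 Z /\ tauw v w = tY v Z).
Proof.
  intros h1 h2 h3 Hv [Hw [Hne [[X [HX Hcol]] Hl]]].
  assert (Hk := dot_unit_lt v w Hv Hw Hne).
  assert (Hneg : forall Z, is_vert Y1 Y2 Y3 Z -> dot v Z - 1 < 0).
  { intros Z [ -> | [ -> | -> ] ]; [pose proof (dot_lt1 v _ Hv h1)|pose proof (dot_lt1 v _ Hv h2)|pose proof (dot_lt1 v _ Hv h3)]; lra. }
  assert (Hcr : forall Z, is_vert Y1 Y2 Y3 Z -> cross (psub w v) (psub Z v) = (dot v w - 1) * (dot v Z - 1) * (tY v Z - tauw v w)).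
  { intros Z HZ. apply cross_tau; auto; try lra. specialize (Hneg Z HZ); lra. }
  assert (Hpos : forall Z, is_vert Y1 Y2 Y3 Z -> 0 < (dot v w - 1) * (dot v Z - 1)).
  { intros Z HZ. specialize (Hneg Z HZ). nra. }
  assert (Hle : forall Z, is_vert Y1 Y2 Y3 Z -> tauw v w <= tY v Z).
  { intros Z HZ. specialize (Hl Z (vert_in_tri _ _ _ _ HZ)). rewrite Hcr in Hl by auto.
    specialize (Hpos Z HZ).
    destruct (Rle_or_lt (tauw v w) (tY v Z)) as [h|h]; auto. nra. }
  split; auto.
  assert (V1 : is_vert Y1 Y2 Y3 Y1) by (left; auto).
  assert (V2 : is_vert Y1 Y2 Y3 Y2) by (right; left; auto).
  assert (V3 : is_vert Y1 Y2 Y3 Y3) by (right; right; auto).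
  destruct HX as [a [b [c [ha [hb [hc [hs EX]]]]]]]. unfold collinear in Hcol.
  rewrite EX in Hcol. fold (bary a b c Y1 Y2 Y3) in Hcol. rewrite cross_tri in Hcol by auto.
  assert (c1 := Hl Y1 (vert_in_tri _ _ _ _ V1)).
  assert (c2 := Hl Y2 (vert_in_tri _ _ _ _ V2)).
  assert (c3 := Hl Y3 (vert_in_tri _ _ _ _ V3)).
  assert (p1 : 0 <= a * cross (psub w v) (psub Y1 v)) by nra.
  assert (p2 : 0 <= b * cross (psub w v) (psub Y2 v)) by nra.
  assert (p3 : 0 <= c * cross (psub w v) (psub Y3 v)) by nra.
  assert (Hzero : forall Z, is_vert Y1 Y2 Y3 Z -> cross (psub w v) (psub Z v) = 0 -> tauw v w = tY v Z).
  { intros Z HZ H0. rewrite Hcr in H0 by auto. specialize (Hpos Z HZ).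
    assert (tY v Z - tauw v w = 0).
    { apply Rmult_integral in H0. destruct H0; auto. lra. }
    lra. }
  destruct (Rlt_or_le 0 a) as [pa|pa].
  - exists Y1. split; auto. apply Hzero; auto.
    assert (a * cross (psub w v) (psub Y1 v) = 0) by lra. apply Rmult_integral in H. destruct H; auto; lra.
  - destruct (Rlt_or_le 0 b) as [pb|pb].
    + exists Y2. split; auto. apply Hzero; auto.
      assert (b * cross (psub w v) (psub Y2 v) = 0) by lra. apply Rmult_integral in H. destruct H; auto; lra.
    + exists Y3. split; auto. apply Hzero; auto.
      assert (c * cross (psub w v) (psub Y3 v) = 0) by lra. apply Rmult_integral in H. destruct H; auto; lra.
Qed.

Lemma psi_unique Y1 Y2 Y3 v w w' : inD Y1 -> inD Y2 -> inD Y3 -> dot v v = 1 ->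
  psi_rel (filled_triangle Y1 Y2 Y3) v w -> psi_rel (filled_triangle Y1 Y2 Y3) v w' -> w = w'.
Proof.
  intros h1 h2 h3 Hv H H'.
  destruct (psi_tau _ _ _ _ _ h1 h2 h3 Hv H) as [Hle [Z [HZ EZ]]].
  destruct (psi_tau _ _ _ _ _ h1 h2 h3 Hv H') as [Hle' [Z' [HZ' EZ']]].
  assert (Heq : tauw v w = tauw v w').
  { specialize (Hle Z' HZ'). specialize (Hle' Z HZ). lra. }
  destruct H as [Hw [Hne _]]. destruct H' as [Hw' [Hne' _]].
  rewrite (w_repr v w Hv Hw Hne), (w_repr v w' Hv Hw' Hne'), Heq. reflexivity.
Qed.

Lemma dot_circ_lt1 x Y : inD Y -> dot (circ x) Y - 1 < 0.
Proof. intros h. pose proof (dot_lt1 (circ x) Y (circ_unit x) h). lra. Qed.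

Lemma FY_derive Y x : inD Y ->
  is_derive (FY Y) x ((1 - dot Y Y) / (1 - 2 * dot (circ x) Y + dot Y Y)).
Proof.
  intros h. assert (H0 := dot_circ_lt1 x Y h). assert (HP := PI_RGT_0).
  assert (Hu := circ_unit x).
  unfold FY, tY. destruct Y as [y1 y2]. unfold circ, dot, cross in *; simpl in *.
  auto_derive.
  - lra.
  - set (C := cos (2*PI*x)) in *. set (S := sin (2*PI*x)) in *.
    assert (Hq : (C*y1+S*y2-1)^2 + (C*y2-S*y1)^2 = 1 - 2*(C*y1+S*y2) + (y1*y1+y2*y2)) by nsat.
    assert (Hp : 0 < (C*y1+S*y2-1)^2) by (apply pow2_gt_0; lra).
    assert (Hp2 : 0 <= (C*y2-S*y1)^2) by (apply pow2_ge_0).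
    field_simplify_eq; [ | repeat split; try lra; nra ].
    nsat.
Qed.

Lemma FY_cont Y x : inD Y -> continuous (FY Y) x.
Proof. intros h. apply (@ex_derive_continuous R_AbsRing R_NormedModule). eexists. apply FY_derive; auto. Qed.

Lemma FY_mono Y a b : inD Y -> a <= b -> FY Y a <= FY Y b.
Proof.
  intros h Hab.
  destruct (MVT_gen (FY Y) a b (fun x => (1 - dot Y Y) / (1 - 2 * dot (circ x) Y + dot Y Y))) as [c [Hc E]].
  - intros x _. apply FY_derive; auto.
  - intros x _. apply continuity_pt_filterlim. apply FY_cont; auto.
  - assert (Hd : 0 <= (1 - dot Y Y) / (1 - 2 * dot (circ c) Y + dot Y Y)).
    { assert (H0 := dot_circ_lt1 c Y h). assert (Hu := circ_unit c). unfold inD in h.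
      assert (Hq : 1 - 2 * dot (circ c) Y + dot Y Y = (dot (circ c) Y - 1)^2 + (cross (circ c) Y)^2).
      { destruct (circ c) as [p q], Y as [y1 y2]; unfold dot, cross in *; simpl in *. nsat. }
      rewrite Hq. apply Rmult_le_pos; [lra|]. left. apply Rinv_0_lt_compat.
      assert (0 < (dot (circ c) Y - 1)^2) by (apply pow2_gt_0; lra).
      assert (0 <= (cross (circ c) Y)^2) by apply pow2_ge_0. lra. }
    nra.
Qed.

Lemma FY_range Y x : 0 < FY Y x - x < 1.
Proof.
  unfold FY. assert (HP := PI_RGT_0). destruct (atan_bound (tY (circ x) Y)) as [h1 h2].
  assert (- /2 < atan (tY (circ x) Y) / PI < /2).
  { split; [apply Rmult_lt_reg_r with PI; auto; unfold Rdiv; rewrite Rmult_assoc, Rinv_l by lra; lra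
           |apply Rmult_lt_reg_r with PI; auto; unfold Rdiv; rewrite Rmult_assoc, Rinv_l by lra; lra]. }
  lra.
Qed.

Lemma FY_period Y x : FY Y (x + 1) = FY Y x + 1.
Proof. unfold FY. rewrite circ_period. ring. Qed.

Section Tri.
Variables Y1 Y2 Y3 : pt.
Hypotheses (h1 : inD Y1) (h2 : inD Y2) (h3 : inD Y3).
Let F := Fx Y1 Y2 Y3.

Lemma Rmin_abs a b : Rmin a b = (a + b - Rabs (a - b)) / 2.
Proof. unfold Rmin. destruct (Rle_dec a b); [rewrite Rabs_left1 by lra | rewrite Rabs_right by lra]; field. Qed.

Lemma cont_Rmin (f g : R -> R) x : continuous f x -> continuous g x -> continuous (fun y => Rmin (f y) (g y)) x.
Proof.
  intros cf cg. apply continuous_ext with (fun y => (f y + g y - Rabs (f y - g y)) * /2).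
  { intros y. rewrite Rmin_abs. reflexivity. }
  apply (@continuous_mult R_UniformSpace R_AbsRing); [|apply continuous_const].
  apply (@continuous_minus R_UniformSpace R_AbsRing R_NormedModule); [apply (@continuous_plus R_UniformSpace R_AbsRing R_NormedModule); auto|].
  apply continuous_Rabs_comp. apply (@continuous_minus R_UniformSpace R_AbsRing R_NormedModule); auto.
Qed.

Lemma F_cont x : continuous F x.
Proof. unfold F, Fx. apply cont_Rmin; [apply FY_cont; auto|]. apply cont_Rmin; apply FY_cont; auto. Qed.

Lemma F_mono a b : a <= b -> F a <= F b.
Proof.
  intros Hab. unfold F, Fx. pose proof (FY_mono Y1 a b h1 Hab). pose proof (FY_mono Y2 a b h2 Hab).
  pose proof (FY_mono Y3 a b h3 Hab).
  apply Rmin_glb. - eapply Rle_trans; [apply Rmin_l|]; auto.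
  - apply Rmin_glb. + eapply Rle_trans; [eapply Rle_trans; [apply Rmin_r| apply Rmin_l]|]; auto.
    + eapply Rle_trans; [eapply Rle_trans; [apply Rmin_r| apply Rmin_r]|]; auto.
Qed.

Lemma F_range x : 0 < F x - x < 1.
Proof.
  unfold F, Fx. pose proof (FY_range Y1 x). pose proof (FY_range Y2 x). pose proof (FY_range Y3 x).
  apply Rmin_case_strong; intros; [lra|]. apply Rmin_case_strong; intros; lra.
Qed.

Lemma Rmin_p1 a b : Rmin (a + 1) (b + 1) = Rmin a b + 1.
Proof. unfold Rmin. destruct (Rle_dec (a+1) (b+1)), (Rle_dec a b); lra. Qed.

Lemma F_period x : F (x + 1) = F x + 1.
Proof. unfold F, Fx. rewrite !FY_period, !Rmin_p1. reflexivity. Qed.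

Lemma F_psi x : psi_rel (filled_triangle Y1 Y2 Y3) (circ x) (circ (F x)).
Proof. apply F_psi_rel; auto. Qed.

Lemma F_lift : psi_lift (filled_triangle Y1 Y2 Y3) F.
Proof.
  split; [apply F_cont|]. split; [apply F_psi|].
  pose proof (F_range 0). lra.
Qed.

Lemma lift_range G : psi_lift (filled_triangle Y1 Y2 Y3) G -> forall x, 0 < G x - x < 1.
Proof.
  intros [Gc [Gp G0]].
  assert (Hn : forall x k, G x = x + k -> k = 0 \/ k = 1 -> False).
  { intros x k E Hk. destruct (Gp x) as [_ [Hne _]]. apply Hne. rewrite E.
    destruct Hk as [-> | ->]; [f_equal; ring| apply circ_period]. }
  assert (H0 : 0 < G 0 - 0).
  { destruct (Req_dec (G 0) 0) as [e|e]; [|lra]. exfalso. apply (Hn 0 0); [rewrite e; ring| auto]. }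
  set (h := fun x => G x - x).
  assert (hc : forall x, continuous h x).
  { intros x. apply (@continuous_minus R_UniformSpace R_AbsRing R_NormedModule); [apply Gc| apply continuous_id]. }
  intros x. split.
  - destruct (Rlt_or_le 0 (G x - x)) as [p|p]; auto. exfalso.
    destruct (IVT_gen_consistent h 0 x 0 hc) as [y [_ Hy]].
    { unfold h. split; [apply Rmin_case_strong; intros; lra | apply Rmax_case_strong; intros; lra]. }
    apply (Hn y 0); [unfold h in Hy; lra | auto].
  - destruct (Rlt_or_le (G x - x) 1) as [p|p]; auto. exfalso.
    destruct (IVT_gen_consistent h 0 x 1 hc) as [y [_ Hy]].
    { unfold h. split; [apply Rmin_case_strong; intros; lra | apply Rmax_case_strong; intros; lra]. }
    apply (Hn y 1); [unfold h in Hy; lra | auto].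
Qed.

Lemma lift_unique G : psi_lift (filled_triangle Y1 Y2 Y3) G -> forall x, G x = F x.
Proof.
  intros HG x. pose proof (lift_range G HG x) as r1. pose proof (F_range x) as r2.
  destruct HG as [_ [Gp _]].
  apply circ_inj.
  - apply Rabs_def1; lra.
  - apply (psi_unique Y1 Y2 Y3 (circ x)); auto. apply circ_unit. apply F_psi.
Qed.
End Tri.

Section Rot.
Variable F : R -> R.
Hypothesis Fmono : forall a b, a <= b -> F a <= F b.
Hypothesis Fper : forall x, F (x + 1) = F x + 1.
Hypothesis Frange : forall x, 0 < F x - x < 1.

Lemma iter_S n x : Nat.iter (S n) F x = F (Nat.iter n F x).
Proof. reflexivity. Qed.

Lemma iter_shift1 n x : Nat.iter n F (x + 1) = Nat.iter n F x + 1.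
Proof. induction n; simpl; auto. rewrite IHn. apply Fper. Qed.

Lemma iter_shift_nat n m x : Nat.iter n F (x + INR m) = Nat.iter n F x + INR m.
Proof.
  induction m as [|m IHm].
  - simpl. rewrite !Rplus_0_r. reflexivity.
  - rewrite S_INR. replace (x + (INR m + 1)) with ((x + INR m) + 1) by ring.
    rewrite iter_shift1, IHm. ring.
Qed.

Lemma iter_shift_Z n k x : Nat.iter n F (x + IZR k) = Nat.iter n F x + IZR k.
Proof.
  destruct (Z_le_gt_dec 0 k) as [hk|hk].
  - rewrite <- (Z2Nat.id k hk), <- INR_IZR_INZ. apply iter_shift_nat.
  - assert (E : k = (- Z.of_nat (Z.to_nat (- k)))%Z) by lia.
    rewrite E, opp_IZR, <- INR_IZR_INZ.
    set (m := Z.to_nat (-k)).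
    pose proof (iter_shift_nat n m (x - INR m)).
    replace (x - INR m + INR m) with x in H by ring.
    unfold Rminus in *. lra.
Qed.

Lemma iter_mono n a b : a <= b -> Nat.iter n F a <= Nat.iter n F b.
Proof. intros H. induction n; simpl; auto. Qed.

Lemma iter_range n x : 0 <= Nat.iter n F x - x <= INR n.
Proof.
  induction n as [|n IHn]; [simpl; lra|]. rewrite S_INR, iter_S. pose proof (Frange (Nat.iter n F x)).
  lra.
Qed.

Variable x0 : R.
Hypothesis Hper : Nat.iter 5 F x0 = x0 + 2.

Lemma iter_5j j : Nat.iter (5 * j) F x0 = x0 + 2 * INR j.
Proof.
  induction j.
  - simpl. ring.
  - replace (5 * S j)%nat with (5 + 5 * j)%nat by lia.
    rewrite Nat.iter_add, IHj.
    replace (x0 + 2 * INR j) with (x0 + INR (j + j)) by (rewrite plus_INR; ring).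
    rewrite iter_shift_nat, Hper, plus_INR, S_INR. ring.
Qed.

Lemma bound_x0 n : Rabs (Nat.iter n F x0 - x0 - 2 * INR n / 5) <= 3.
Proof.
  pose proof (Nat.div_mod n 5 ltac:(lia)) as Hd.
  set (j := (n / 5)%nat) in *. set (i := (n mod 5)%nat) in *.
  assert (Hi : (i < 5)%nat) by (apply Nat.mod_upper_bound; lia).
  assert (E : Nat.iter n F x0 = Nat.iter i F x0 + INR (j + j)).
  { rewrite Hd, Nat.add_comm, Nat.iter_add, iter_5j.
    replace (x0 + 2 * INR j) with (x0 + INR (j + j)) by (rewrite plus_INR; ring).
    apply iter_shift_nat. }
  assert (En : INR n = 5 * INR j + INR i) by (rewrite Hd, plus_INR, mult_INR; simpl; ring).
  rewrite E, En, plus_INR. pose proof (iter_range i x0).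
  assert (INR i <= 4) by (replace 4 with (INR 4) by (simpl; ring); apply le_INR; lia).
  assert (0 <= INR i) by apply pos_INR.
  simpl INR. apply Rabs_le. split; lra.
Qed.

Lemma bound_x n x : Rabs (Nat.iter n F x - x - 2 * INR n / 5) <= 4.
Proof.
  set (k := Int_part (x - x0)). destruct (base_Int_part (x - x0)) as [b1 b2]. fold k in b1, b2.
  assert (L : Nat.iter n F (x0 + IZR k) <= Nat.iter n F x) by (apply iter_mono; lra).
  assert (U : Nat.iter n F x <= Nat.iter n F (x0 + IZR k + 1)) by (apply iter_mono; lra).
  rewrite iter_shift1, iter_shift_Z in U. rewrite iter_shift_Z in L.
  pose proof (bound_x0 n) as B. apply Rabs_le. apply Rabs_le_between in B. lra.
Qed.

Lemma rot_limit x : is_lim_seq (fun n => (Nat.iter n F x - x) / INR n) (2/5).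
Proof.
  apply is_lim_seq_le_le_loc with (u := fun n => 2/5 - 4 * / INR n) (w := fun n => 2/5 + 4 * / INR n).
  - exists 1%nat. intros n Hn. assert (Hp : 0 < INR n) by (apply lt_0_INR; lia).
    pose proof (bound_x n x) as B. apply Rabs_le_between in B.
    set (A := Nat.iter n F x - x) in *.
    replace (A / INR n) with (2/5 + (A - 2 * INR n / 5) * / INR n) by (field; lra).
    assert (0 < / INR n) by (apply Rinv_0_lt_compat; auto).
    split; nra.
  - assert (L : is_lim_seq (fun n => 2/5 - 4 * / INR n) (2/5 - 4 * 0)).
    { apply is_lim_seq_minus'. apply is_lim_seq_const.
      apply (is_lim_seq_scal_l _ 4 0). apply (is_lim_seq_inv INR p_infty); [apply is_lim_seq_INR|discriminate]. }
    replace (2/5 - 4 * 0) with (2/5) in L by ring. exact L.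
  - assert (L : is_lim_seq (fun n => 2/5 + 4 * / INR n) (2/5 + 4 * 0)).
    { apply is_lim_seq_plus'. apply is_lim_seq_const.
      apply (is_lim_seq_scal_l _ 4 0). apply (is_lim_seq_inv INR p_infty); [apply is_lim_seq_INR|discriminate]. }
    replace (2/5 + 4 * 0) with (2/5) in L by ring. exact L.
Qed.
End Rot.

Lemma cross3_circ a b c :
  cross3 (circ a) (circ b) (circ c) = 4 * sin (PI*(b-a)) * sin (PI*(c-b)) * sin (PI*(c-a)).
Proof.
  unfold cross3, circ, cross, psub; simpl.
  replace (2*PI*a) with (2*(PI*a)) by ring. replace (2*PI*b) with (2*(PI*b)) by ring.
  replace (2*PI*c) with (2*(PI*c)) by ring.
  replace (PI*(b-a)) with (PI*b - PI*a) by ring. replace (PI*(c-b)) with (PI*c - PI*b) by ring.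
  replace (PI*(c-a)) with (PI*c - PI*a) by ring.
  rewrite !cos_2a, !sin_2a, !sin_minus.
  pose proof (sin2_cos2 (PI*a)). pose proof (sin2_cos2 (PI*b)). pose proof (sin2_cos2 (PI*c)).
  unfold Rsqr in *.
  set (pa := PI*a) in *. set (pb := PI*b) in *. set (pc := PI*c) in *.
  set (ca := cos pa) in *. set (sa := sin pa) in *. set (cb := cos pb) in *. set (sb := sin pb) in *.
  set (cc := cos pc) in *. set (sc := sin pc) in *.
  nsat.
Qed.

Lemma PI_mul_bounds t : 0 < t < 1 -> 0 < PI * t < PI.
Proof. intros [h1 h2]. assert (HP := PI_RGT_0). split; [apply Rmult_lt_0_compat; lra|].
  assert (PI * (1 - t) > 0) by (apply Rmult_lt_0_compat; lra). lra. Qed.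

Lemma PI_mul_bounds2 t : 1 < t < 2 -> PI < PI * t < 2 * PI.
Proof. intros [h1 h2]. assert (HP := PI_RGT_0).
  assert (PI * (t - 1) > 0) by (apply Rmult_lt_0_compat; lra).
  assert (PI * (2 - t) > 0) by (apply Rmult_lt_0_compat; lra). lra. Qed.

Lemma orient a b c : 0 < b - a < 1 -> 0 < c - b < 1 ->
  (0 < cross3 (circ a) (circ b) (circ c) <-> c - a < 1).
Proof.
  intros h1 h2. rewrite cross3_circ. assert (HP := PI_RGT_0).
  assert (s1 : 0 < sin (PI*(b-a))) by (apply sin_gt_0; apply PI_mul_bounds; lra).
  assert (s2 : 0 < sin (PI*(c-b))) by (apply sin_gt_0; apply PI_mul_bounds; lra).
  split; intro H.
  - destruct (Rlt_or_le (c-a) 1) as [h|h]; auto. exfalso.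
    destruct (Req_dec (c-a) 1) as [e|e].
    + rewrite e, Rmult_1_r, sin_PI in H. lra.
    + destruct (PI_mul_bounds2 (c-a)) as [u v]; [lra|].
      assert (sin (PI*(c-a)) < 0) by (apply sin_lt_0; auto).
      assert (0 < sin (PI*(b-a)) * sin (PI*(c-b))) by nra. nra.
  - assert (0 < sin (PI*(c-a))) by (apply sin_gt_0; apply PI_mul_bounds; lra).
    assert (0 < sin (PI*(b-a)) * sin (PI*(c-b))) by nra. nra.
Qed.

Lemma cross3_swap A B C : cross3 A C B = - cross3 A B C.
Proof. destruct A, B, C; unfold cross3, cross, psub; simpl; ring. Qed.

Lemma cross3_degen A B : cross3 A B B = 0.
Proof. destruct A, B; unfold cross3, cross, psub; simpl; ring. Qed.

Lemma iter_ext (f g : R -> R) : (forall x, f x = g x) -> forall n x, Nat.iter n f x = Nat.iter n g x.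
Proof. intros H n x. induction n; simpl; auto. rewrite IHn. apply H. Qed.

Lemma circ_plus2 x : circ (x + 2) = circ x.
Proof. replace (x+2) with ((x+1)+1) by ring. rewrite !circ_period. reflexivity. Qed.

Theorem core_rot (Y1 Y2 Y3 w0 w1 w2 w3 w4 : pt) :
  inD Y1 -> inD Y2 -> inD Y3 -> dot w0 w0 = 1 ->
  psi_rel (filled_triangle Y1 Y2 Y3) w0 w1 ->
  psi_rel (filled_triangle Y1 Y2 Y3) w1 w2 ->
  psi_rel (filled_triangle Y1 Y2 Y3) w2 w3 ->
  psi_rel (filled_triangle Y1 Y2 Y3) w3 w4 ->
  psi_rel (filled_triangle Y1 Y2 Y3) w4 w0 ->
  0 < cross3 w3 w4 w0 -> 0 < cross3 w1 w2 w3 -> 0 < cross3 w4 w2 w0 -> 0 < cross3 w2 w3 w4 ->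
  rot_number_is (filled_triangle Y1 Y2 Y3) (2/5).
Proof.
  intros h1 h2 h3 Hw0 P0 P1 P2 P3 P4 O1 O2 O3 O4.
  set (F := Fx Y1 Y2 Y3).
  destruct (circ_surj w0 Hw0) as [x0 Hx0].
  assert (step : forall x w w', circ x = w -> psi_rel (filled_triangle Y1 Y2 Y3) w w' -> circ (F x) = w').
  { intros x w w' Hx Hp. subst w. apply (psi_unique Y1 Y2 Y3 (circ x)); auto. apply circ_unit.
    apply F_psi; auto. }
  set (x1 := F x0). set (x2 := F x1). set (x3 := F x2). set (x4 := F x3). set (x5 := F x4).
  assert (c1 : circ x1 = w1) by (apply (step x0 w0); auto).
  assert (c2 : circ x2 = w2) by (apply (step x1 w1); auto).
  assert (c3 : circ x3 = w3) by (apply (step x2 w2); auto).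
  assert (c4 : circ x4 = w4) by (apply (step x3 w3); auto).
  assert (c5 : circ x5 = w0) by (apply (step x4 w4); auto).
  assert (r0 := F_range Y1 Y2 Y3 x0). assert (r1 := F_range Y1 Y2 Y3 x1).
  assert (r2 := F_range Y1 Y2 Y3 x2). assert (r3 := F_range Y1 Y2 Y3 x3).
  assert (r4 := F_range Y1 Y2 Y3 x4).
  fold F x1 x2 x3 x4 x5 in r0, r1, r2, r3, r4.
  assert (i1 : x3 - x1 < 1).
  { apply (orient x1 x2 x3); try lra. rewrite c1, c2, c3. auto. }
  assert (i2 : x5 - x3 < 1).
  { apply (orient x3 x4 x5); try lra. rewrite c3, c4, c5. auto. }
  assert (i3 : x4 - x2 < 1).
  { apply (orient x2 x3 x4); try lra. rewrite c2, c3, c4. auto. }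
  assert (i4 : x2 + 1 < x5).
  { destruct (Rlt_or_le (x2 + 1) x5) as [h|h]; auto. exfalso.
    destruct (Req_dec x5 (x2 + 1)) as [e|e].
    - assert (w0 = w2) by (rewrite <- c5, <- c2, e; apply circ_period).
      rewrite H, cross3_degen in O3. lra.
    - assert (0 < cross3 (circ x4) (circ x5) (circ (x2+1))).
      { apply orient; lra. }
      rewrite circ_period, c4, c5, c2 in H. rewrite cross3_swap in O3. lra. }
  assert (E5 : Nat.iter 5 F x0 = x0 + 2).
  { change (x5 = x0 + 2). apply circ_inj.
    - apply Rabs_def1; lra.
    - rewrite c5, circ_plus2. auto. }
  split.
  - exists F. apply F_lift; auto.
  - intros G HG x.
    assert (HGF : forall y, G y = F y) by (apply lift_unique; auto).
    apply is_lim_seq_ext with (fun n => (Nat.iter n F x - x) / INR n).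
    { intros n. rewrite (iter_ext G F HGF). reflexivity. }
    apply (rot_limit F) with x0.
    + intros a b; apply F_mono; auto.
    + apply F_period; auto.
    + apply F_range; auto.
    + exact E5.
Qed.

Definition v3 := (R * R * R)%type.
Definition x3 (u : v3) := fst (fst u).
Definition y3 (u : v3) := snd (fst u).
Definition z3 (u : v3) := snd u.
Definition ldot (u v : v3) : R := x3 u * x3 v + y3 u * y3 v - z3 u * z3 v.
Definition hom (X : pt) : v3 := (fst X, snd X, 1).
Definition lin3 (c1 c2 c3 : v3) (a b e : R) : v3 :=
  (a * x3 c1 + b * x3 c2 + e * x3 c3, a * y3 c1 + b * y3 c2 + e * y3 c3, a * z3 c1 + b * z3 c2 + e * z3 c3).
Definition gden (c1 c2 c3 : v3) (X : pt) : R := fst X * z3 c1 + snd X * z3 c2 + z3 c3.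
Definition gmap (c1 c2 c3 : v3) (X : pt) : pt :=
  let h := lin3 c1 c2 c3 (fst X) (snd X) 1 in (x3 h / z3 h, y3 h / z3 h).
Definition det3 (c1 c2 c3 : v3) : R :=
  x3 c1 * (y3 c2 * z3 c3 - z3 c2 * y3 c3) - x3 c2 * (y3 c1 * z3 c3 - z3 c1 * y3 c3)
  + x3 c3 * (y3 c1 * z3 c2 - z3 c1 * y3 c2).

Definition lorentz (c1 c2 c3 : v3) (m : R) : Prop :=
  ldot c1 c1 = m /\ ldot c2 c2 = m /\ ldot c3 c3 = - m /\
  ldot c1 c2 = 0 /\ ldot c1 c3 = 0 /\ ldot c2 c3 = 0.

Section G.
Variables (c1 c2 c3 : v3) (m : R).
Hypothesis HL : lorentz c1 c2 c3 m.

Lemma g_norm X : gden c1 c2 c3 X <> 0 ->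
  dot (gmap c1 c2 c3 X) (gmap c1 c2 c3 X) - 1 = m * (dot X X - 1) / (gden c1 c2 c3 X)^2.
Proof.
  destruct HL as [e1 [e2 [e3 [e4 [e5 e6]]]]].
  destruct c1 as [[a1 b1] d1], c2 as [[a2 b2] d2], c3 as [[a3 b3] d3], X as [x y].
  unfold gden, gmap, lin3, dot, ldot, x3, y3, z3 in *; simpl in *. intros H.
  field_simplify_eq; [nsat|auto].
Qed.

Lemma g_dot X Y : gden c1 c2 c3 X <> 0 -> gden c1 c2 c3 Y <> 0 ->
  1 - dot (gmap c1 c2 c3 X) (gmap c1 c2 c3 Y) = m * (1 - dot X Y) / (gden c1 c2 c3 X * gden c1 c2 c3 Y).
Proof.
  destruct HL as [e1 [e2 [e3 [e4 [e5 e6]]]]].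
  destruct c1 as [[a1 b1] d1], c2 as [[a2 b2] d2], c3 as [[a3 b3] d3], X as [x y], Y as [x' y'].
  unfold gden, gmap, lin3, dot, ldot, x3, y3, z3 in *; simpl in *. intros H H'.
  field_simplify_eq; [nsat|auto].
Qed.
End G.

Lemma g_cross3 c1 c2 c3 A B C : gden c1 c2 c3 A <> 0 -> gden c1 c2 c3 B <> 0 -> gden c1 c2 c3 C <> 0 ->
  cross3 (gmap c1 c2 c3 A) (gmap c1 c2 c3 B) (gmap c1 c2 c3 C) =
  det3 c1 c2 c3 * cross3 A B C / (gden c1 c2 c3 A * gden c1 c2 c3 B * gden c1 c2 c3 C).
Proof.
  destruct c1 as [[a1 b1] d1], c2 as [[a2 b2] d2], c3 as [[a3 b3] d3], A as [x y], B as [x' y'], C as [x'' y''].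
  unfold gden, gmap, lin3, det3, cross3, cross, psub, x3, y3, z3 in *; simpl in *. intros H H' H''.
  field. auto.
Qed.

Lemma g_den_pos c1 c2 c3 X : (z3 c1)^2 + (z3 c2)^2 < (z3 c3)^2 -> 0 < z3 c3 -> dot X X <= 1 ->
  0 < gden c1 c2 c3 X.
Proof.
  destruct c1 as [[a1 b1] d1], c2 as [[a2 b2] d2], c3 as [[a3 b3] d3], X as [x y].
  unfold gden, dot, x3, y3, z3; simpl. intros H1 H2 H3.
  assert ((x*d1 + y*d2)^2 <= (d1^2+d2^2)*(x*x+y*y)).
  { assert (0 <= (x*d2 - y*d1)^2) by apply pow2_ge_0. nra. }
  assert ((x*d1 + y*d2)^2 < d3^2) by nra.
  nra.
Qed.

Definition mkc1 (sg : R) (S d : pt) : v3 :=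
  let C0 := 1 - dot S S in let ds := dot d S in
  (sg*(C0*fst d + ds*fst S), sg*(C0*snd d + ds*snd S), sg*ds).
Definition mkc2 (sg k0 : R) (S d : pt) : v3 :=
  (sg*k0*(- snd d), sg*k0*fst d, sg*k0*(- snd d * fst S + fst d * snd S)).
Definition mkc3 (kK : R) (S : pt) : v3 := (kK*fst S, kK*snd S, kK).
Definition C0of (S : pt) := 1 - dot S S.
Definition Kof (S d : pt) := C0of S * dot d d + (dot d S)^2.

Section MK.
Variables (sg k0 kK : R) (S d : pt).
Hypotheses (Hsg : sg * sg = 1) (Hk0 : k0 * k0 = C0of S) (HkK : kK * kK = Kof S d).

Lemma mk_lorentz : lorentz (mkc1 sg S d) (mkc2 sg k0 S d) (mkc3 kK S) (C0of S * Kof S d).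
Proof.
  unfold lorentz, mkc1, mkc2, mkc3, Kof, C0of in *.
  destruct S as [s1 s2], d as [e1 e2].
  unfold ldot, dot, x3, y3, z3 in *; simpl in *.
  repeat split; nsat.
Qed.

Lemma mk_det : det3 (mkc1 sg S d) (mkc2 sg k0 S d) (mkc3 kK S) = k0 * kK * C0of S * Kof S d.
Proof.
  unfold det3, mkc1, mkc2, mkc3, Kof, C0of in *.
  destruct S as [s1 s2], d as [e1 e2].
  unfold dot, x3, y3, z3 in *; simpl in *. nsat.
Qed.

End MK.

Definition prei (c1 c2 c3 : v3) (X : pt) : pt :=
  (- ldot c1 (hom X) / ldot c3 (hom X), - ldot c2 (hom X) / ldot c3 (hom X)).

Lemma mk_expand sg k0 kK S d X : sg * sg = 1 -> k0 * k0 = C0of S -> kK * kK = Kof S d ->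
  let c1 := mkc1 sg S d in let c2 := mkc2 sg k0 S d in let c3 := mkc3 kK S in
  lin3 c1 c2 c3 (ldot c1 (hom X)) (ldot c2 (hom X)) (- ldot c3 (hom X)) =
  (C0of S * Kof S d * fst X, C0of S * Kof S d * snd X, C0of S * Kof S d).
Proof.
  intros Hsg Hk0 HkK. unfold lin3, mkc1, mkc2, mkc3, Kof, C0of in *.
  destruct S as [s1 s2], d as [e1 e2], X as [x y].
  unfold hom, ldot, dot, x3, y3, z3 in *; simpl in *.
  f_equal; [f_equal|]; nsat.
Qed.

Definition ptu (u : R) : pt := ((1 - u*u)/(1 + u*u), 2*u/(1 + u*u)).

Lemma ptu_unit u : dot (ptu u) (ptu u) = 1.
Proof. unfold ptu, dot; simpl. assert (0 < 1 + u*u) by nra. field. lra. Qed.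

Lemma cross3_ptu u v Y : cross3 (ptu u) (ptu v) Y =
  2*(v-u)/((1+u*u)*(1+v*v)) * (1 + u*v - (u+v)*snd Y - (1 - u*v)*fst Y).
Proof.
  unfold cross3, ptu, cross, psub; destruct Y as [y1 y2]; simpl.
  assert (0 < 1 + u*u) by nra. assert (0 < 1 + v*v) by nra. field. lra.
Qed.

Lemma cross3_ptu3 a b c : cross3 (ptu a) (ptu b) (ptu c) =
  4*(b-a)*(c-a)*(c-b)/((1+a*a)*(1+b*b)*(1+c*c)).
Proof.
  rewrite cross3_ptu. unfold ptu; simpl.
  assert (0 < 1 + a*a) by nra. assert (0 < 1 + b*b) by nra. assert (0 < 1 + c*c) by nra. field. lra.
Qed.

Definition Lv (A : R) : pt := (- (A-1)/(A+1), 0).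
Definition Rv (B : R) : pt := ((B-1)/(B+1), 0).
Definition Tv (C : R) : pt := (0, 2*C/(1+C*C)).

Definition step_ok (v w Y1 Y2 Y3 : pt) : Prop :=
  (forall Z, is_vert Y1 Y2 Y3 Z -> 0 <= cross3 v w Z) /\
  (exists Z, is_vert Y1 Y2 Y3 Z /\ cross3 v w Z = 0) /\
  (exists Z, is_vert Y1 Y2 Y3 Z /\ 0 < cross3 v w Z).

Section Norm.
Variables A B : R.
Hypotheses (hA : 1 <= A) (hB : 1 <= B) (hAB : 1 < A * B).

Lemma lv_ell u v : 1 + u*v - (u+v)*snd (Lv A) - (1 - u*v)*fst (Lv A) = 2*(A + u*v)/(A+1).
Proof. unfold Lv; simpl. field. lra. Qed.
Lemma rv_ell u v : 1 + u*v - (u+v)*snd (Rv B) - (1 - u*v)*fst (Rv B) = 2*(1 + B*u*v)/(B+1).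
Proof. unfold Rv; simpl. field. lra. Qed.
Lemma tv_ell C u v : 1 + u*v - (u+v)*snd (Tv C) - (1 - u*v)*fst (Tv C) = 1 + u*v - (u+v)*(2*C/(1+C*C)).
Proof. unfold Tv; simpl. ring. Qed.

End Norm.

Lemma sgn_le u v l : 0 <= (v - u) * l -> 0 <= 2*(v-u)/((1+u*u)*(1+v*v)) * l.
Proof.
  intros h. assert (0 < (1+u*u)*(1+v*v)) by (apply Rmult_lt_0_compat; nra).
  replace (2*(v-u)/((1+u*u)*(1+v*v)) * l) with (2 * / ((1+u*u)*(1+v*v)) * ((v - u) * l)) by (field; repeat split; nra).
  apply Rmult_le_pos; auto. apply Rmult_le_pos; [lra|]. left; apply Rinv_0_lt_compat; auto.
Qed.
Lemma sgn_lt u v l : 0 < (v - u) * l -> 0 < 2*(v-u)/((1+u*u)*(1+v*v)) * l.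
Proof.
  intros h. assert (0 < (1+u*u)*(1+v*v)) by (apply Rmult_lt_0_compat; nra).
  replace (2*(v-u)/((1+u*u)*(1+v*v)) * l) with (2 * / ((1+u*u)*(1+v*v)) * ((v - u) * l)) by (field; repeat split; nra).
  apply Rmult_lt_0_compat; auto. apply Rmult_lt_0_compat; [lra|]. apply Rinv_0_lt_compat; auto.
Qed.
Lemma sgn_eq u v l : l = 0 -> 2*(v-u)/((1+u*u)*(1+v*v)) * l = 0.
Proof. intros ->. ring. Qed.

Section Steps.
Variables A B : R.
Hypotheses (hA : 1 <= A) (hB : 1 <= B) (hAB : 1 < A * B).
Let L := Lv A.
Let Rt := Rv B.
Let T := Tv (A*B).

Lemma rho_le1 : 0 <= 2*(A*B)/(1+(A*B)*(A*B)) <= 1.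
Proof.
  assert (0 < 1 + (A*B)*(A*B)) by nra. split.
  - apply Rmult_le_pos; [nra|]. left; apply Rinv_0_lt_compat; auto.
  - apply Rmult_le_reg_r with (1 + (A*B)*(A*B)); auto. unfold Rdiv. rewrite Rmult_assoc, Rinv_l by lra.
    assert (0 <= (A*B - 1)^2) by apply pow2_ge_0. nra.
Qed.

Ltac crs := unfold L, Rt, T; rewrite cross3_ptu; try rewrite lv_ell by lra; try rewrite rv_ell by lra; try rewrite tv_ell.

Lemma step0 : step_ok (ptu 1) (ptu (-A)) L Rt T.
Proof.
  pose proof rho_le1 as [r1 r2]. set (rho := 2*(A*B)/(1+(A*B)*(A*B))) in *.
  assert (VL : 0 = cross3 (ptu 1) (ptu (-A)) L) by (crs; symmetry; apply sgn_eq; field; lra).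
  assert (VR : 0 < cross3 (ptu 1) (ptu (-A)) Rt).
  { crs. apply sgn_lt. replace ((-A - 1) * (2 * (1 + B * 1 * - A) / (B + 1))) with (2*(A+1)*(A*B-1)/(B+1)) by (field; lra).
    apply Rdiv_lt_0_compat; nra. }
  assert (VT : 0 <= cross3 (ptu 1) (ptu (-A)) T).
  { crs. apply sgn_le. fold rho. replace ((-A - 1) * (1 + 1 * - A - (1 + - A) * rho)) with ((A+1)*(A-1)*(1-rho)) by ring.
    apply Rmult_le_pos; nra. }
  split; [|split].
  - intros Z [ -> | [ -> | -> ] ]; lra.
  - exists L. split; [left; auto| auto].
  - exists Rt. split; [right; left; auto| auto].
Qed.

Ltac rwg F := match goal with
  | |- 0 <= ?X => replace X with F by (field; repeat split; nra)
  | |- 0 < ?X => replace X with F by (field; repeat split; nra)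
  end.

Lemma pos_div x y : 0 < x -> 0 < y -> 0 < x / y.
Proof. intros. apply Rdiv_lt_0_compat; auto. Qed.
Lemma nonneg_div x y : 0 <= x -> 0 < y -> 0 <= x / y.
Proof. intros. unfold Rdiv. apply Rmult_le_pos; auto. left; apply Rinv_0_lt_compat; auto. Qed.

Ltac posi := repeat (apply pos_div || apply Rmult_lt_0_compat); nra.

Lemma step1 : step_ok (ptu (-A)) (ptu (/(A*B))) L Rt T.
Proof.
  pose proof rho_le1 as [r1 r2]. set (rho := 2*(A*B)/(1+(A*B)*(A*B))) in *.
  assert (VL : 0 < cross3 (ptu (-A)) (ptu (/(A*B))) L).
  { crs. apply sgn_lt. rwg (2*(1+A*A*B)*(A*B-1)/(A*B*B*(A+1))). posi. }
  assert (VR : 0 = cross3 (ptu (-A)) (ptu (/(A*B))) Rt) by (crs; symmetry; apply sgn_eq; field; nra).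
  assert (VT : 0 <= cross3 (ptu (-A)) (ptu (/(A*B))) T).
  { crs. apply sgn_le. fold rho. rwg (((1+A*A*B)/(A*B)) * ((B-1)/B + ((A*A*B - 1)/(A*B))*rho)).
    apply Rmult_le_pos; [apply nonneg_div; nra|]. apply Rplus_le_le_0_compat; [apply nonneg_div; nra|].
    apply Rmult_le_pos; auto; apply nonneg_div; nra. }
  split; [|split].
  - intros Z [ -> | [ -> | -> ] ]; lra.
  - exists Rt. split; [right; left; auto| auto].
  - exists L. split; [left; auto| auto].
Qed.

Lemma step2 : step_ok (ptu (/(A*B))) (ptu (A*B)) L Rt T.
Proof.
  assert (VL : 0 < cross3 (ptu (/(A*B))) (ptu (A*B)) L).
  { crs. apply sgn_lt. rwg (2*((A*B)*(A*B)-1)/(A*B)). posi. }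
  assert (VR : 0 < cross3 (ptu (/(A*B))) (ptu (A*B)) Rt).
  { crs. apply sgn_lt. rwg (2*((A*B)*(A*B)-1)/(A*B)). posi. }
  assert (VT : 0 = cross3 (ptu (/(A*B))) (ptu (A*B)) T) by (crs; symmetry; apply sgn_eq; field; nra).
  split; [|split].
  - intros Z [ -> | [ -> | -> ] ]; lra.
  - exists T. split; [right; right; auto| auto].
  - exists L. split; [left; auto| auto].
Qed.

Lemma step3 : step_ok (ptu (A*B)) (ptu (-/B)) L Rt T.
Proof.
  pose proof rho_le1 as [r1 r2]. set (rho := 2*(A*B)/(1+(A*B)*(A*B))) in *.
  assert (VL : 0 = cross3 (ptu (A*B)) (ptu (-/B)) L) by (crs; symmetry; apply sgn_eq; field; nra).
  assert (VR : 0 < cross3 (ptu (A*B)) (ptu (-/B)) Rt).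
  { crs. apply sgn_lt. rwg (2*(1+A*B*B)*(A*B-1)/(B*(B+1))). posi. }
  assert (VT : 0 <= cross3 (ptu (A*B)) (ptu (-/B)) T).
  { crs. apply sgn_le. fold rho. rwg (((1+A*B*B)/B) * ((A-1) + ((A*B*B - 1)/B)*rho)).
    apply Rmult_le_pos; [apply nonneg_div; nra|]. apply Rplus_le_le_0_compat; [lra|].
    apply Rmult_le_pos; auto; apply nonneg_div; nra. }
  split; [|split].
  - intros Z [ -> | [ -> | -> ] ]; lra.
  - exists L. split; [left; auto| auto].
  - exists Rt. split; [right; left; auto| auto].
Qed.

Lemma step4 : step_ok (ptu (-/B)) (ptu 1) L Rt T.
Proof.
  pose proof rho_le1 as [r1 r2]. set (rho := 2*(A*B)/(1+(A*B)*(A*B))) in *.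
  assert (VL : 0 < cross3 (ptu (-/B)) (ptu 1) L).
  { crs. apply sgn_lt. rwg (2*(B+1)*(A*B-1)/(B*B*(A+1))). posi. }
  assert (VR : 0 = cross3 (ptu (-/B)) (ptu 1) Rt) by (crs; symmetry; apply sgn_eq; field; nra).
  assert (VT : 0 <= cross3 (ptu (-/B)) (ptu 1) T).
  { crs. apply sgn_le. fold rho. rwg (((B+1)/B) * ((B-1)/B) * (1 - rho)).
    apply Rmult_le_pos; [|lra]. apply Rmult_le_pos; apply nonneg_div; nra. }
  split; [|split].
  - intros Z [ -> | [ -> | -> ] ]; lra.
  - exists Rt. split; [right; left; auto| auto].
  - exists L. split; [left; auto| auto].
Qed.

Lemma orients :
  0 < cross3 (ptu (A*B)) (ptu (-/B)) (ptu 1) /\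
  0 < cross3 (ptu (-A)) (ptu (/(A*B))) (ptu (A*B)) /\
  0 < cross3 (ptu (-/B)) (ptu (/(A*B))) (ptu 1) /\
  0 < cross3 (ptu (/(A*B))) (ptu (A*B)) (ptu (-/B)).
Proof.
  rewrite !cross3_ptu3.
  assert (hb : 0 < /B) by (apply Rinv_0_lt_compat; lra).
  assert (hb1 : /B <= 1) by (rewrite <- Rinv_1; apply Rinv_le_contravar; lra).
  assert (hc0 : 0 < /(A*B)) by (apply Rinv_0_lt_compat; lra).
  assert (hc : /(A*B) < 1) by (rewrite <- Rinv_1; apply Rinv_lt_contravar; lra).
  assert (K : forall a b c, 0 < (b-a)*((c-a)*(c-b)) -> 0 < 4*(b-a)*(c-a)*(c-b)/((1+a*a)*(1+b*b)*(1+c*c))).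
  { intros a b c h1. apply pos_div. - replace (4*(b-a)*(c-a)*(c-b)) with (4*((b-a)*((c-a)*(c-b)))) by ring. lra.
    - apply Rmult_lt_0_compat; [apply Rmult_lt_0_compat|]; nra. }
  assert (NN : forall x y, x < 0 -> y < 0 -> 0 < x * y) by (intros; nra).
  assert (PP : forall x y, 0 < x -> 0 < y -> 0 < x * y) by (intros; nra).
  assert (PN : forall x y, x < 0 -> y < 0 -> x * y > 0) by (intros; nra).
  repeat split; apply K.
  - apply NN; [lra|]. assert (1 - A*B < 0) by lra. assert (0 < 1 - - /B) by lra. nra.
  - apply PP; [lra|]. apply PP; lra.
  - apply PP; [lra|]. apply PP; lra.
  - apply PP; [lra|]. apply NN; lra.
Qed.
End Steps.

Lemma psi_from_step Y1 Y2 Y3 v w : dot v v = 1 -> dot w w = 1 -> step_ok v w Y1 Y2 Y3 ->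
  psi_rel (filled_triangle Y1 Y2 Y3) v w.
Proof.
  intros hv hw [H1 [[Z [HZ EZ]] [Z' [HZ' PZ']]]].
  split; auto. split.
  { intros E. subst w. unfold cross3 in PZ'. destruct v, Z'; unfold cross, psub in PZ'; simpl in PZ'. lra. }
  split.
  - exists Z. split; [apply vert_in_tri; auto| exact EZ].
  - intros X [a [b [c [ha [hb [hc [hs ->]]]]]]]. fold (bary a b c Y1 Y2 Y3).
    rewrite cross_tri by auto.
    assert (c1 := H1 Y1 (or_introl eq_refl)).
    assert (c2 := H1 Y2 (or_intror (or_introl eq_refl))).
    assert (c3 := H1 Y3 (or_intror (or_intror eq_refl))).
    unfold cross3 in *. nra.
Qed.

Lemma step_ok_perm v w Y1 Y2 Y3 Z1 Z2 Z3 :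
  (forall Z, is_vert Y1 Y2 Y3 Z <-> is_vert Z1 Z2 Z3 Z) -> step_ok v w Y1 Y2 Y3 -> step_ok v w Z1 Z2 Z3.
Proof.
  intros Hp [H1 [[Z [HZ EZ]] [Z' [HZ' PZ']]]]. split; [|split].
  - intros Z0 h. apply H1, Hp, h.
  - exists Z. split; auto. apply Hp; auto.
  - exists Z'. split; auto. apply Hp; auto.
Qed.

Section Transport.
Variables (c1 c2 c3 : v3) (m : R).
Hypotheses (HL : lorentz c1 c2 c3 m) (hm : 0 < m) (hdet : 0 < det3 c1 c2 c3)
  (hz : (z3 c1)^2 + (z3 c2)^2 < (z3 c3)^2) (hz3 : 0 < z3 c3).
Let g := gmap c1 c2 c3.

Lemma den_pos X : dot X X <= 1 -> 0 < gden c1 c2 c3 X.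
Proof. intros; apply g_den_pos; auto. Qed.

Lemma t_cross3 a b c : dot a a <= 1 -> dot b b <= 1 -> dot c c <= 1 ->
  exists k, 0 < k /\ cross3 (g a) (g b) (g c) = k * cross3 a b c.
Proof.
  intros ha hb hc. pose proof (den_pos a ha). pose proof (den_pos b hb). pose proof (den_pos c hc).
  exists (det3 c1 c2 c3 / (gden c1 c2 c3 a * gden c1 c2 c3 b * gden c1 c2 c3 c)).
  split.
  - apply Rdiv_lt_0_compat; auto. apply Rmult_lt_0_compat; [apply Rmult_lt_0_compat|]; auto.
  - unfold g. rewrite g_cross3 by lra. field. repeat split; lra.
Qed.

Lemma t_unit X : dot X X = 1 -> dot (g X) (g X) = 1.
Proof.
  intros h. pose proof (den_pos X ltac:(lra)).
  pose proof (g_norm c1 c2 c3 m HL X ltac:(lra)). rewrite h in H0. unfold g.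
  replace (m * (1 - 1) / gden c1 c2 c3 X ^ 2) with 0 in H0 by (field; lra). lra.
Qed.

Lemma t_step v w Y1 Y2 Y3 : dot v v <= 1 -> dot w w <= 1 -> dot Y1 Y1 <= 1 -> dot Y2 Y2 <= 1 -> dot Y3 Y3 <= 1 ->
  step_ok v w Y1 Y2 Y3 -> step_ok (g v) (g w) (g Y1) (g Y2) (g Y3).
Proof.
  intros hv hw h1 h2 h3 [H1 [[Z [HZ EZ]] [Z' [HZ' PZ']]]].
  assert (hvert : forall Z, is_vert Y1 Y2 Y3 Z -> dot Z Z <= 1) by (intros Z0 [ -> | [ -> | -> ] ]; auto).
  split; [|split].
  - intros Z0 [ -> | [ -> | -> ] ].
    + destruct (t_cross3 v w Y1) as [k [hk E]]; auto. rewrite E. apply Rmult_le_pos; [lra|]. apply H1; left; auto.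
    + destruct (t_cross3 v w Y2) as [k [hk E]]; auto. rewrite E. apply Rmult_le_pos; [lra|]. apply H1; right; left; auto.
    + destruct (t_cross3 v w Y3) as [k [hk E]]; auto. rewrite E. apply Rmult_le_pos; [lra|]. apply H1; right; right; auto.
  - exists (g Z). split.
    + destruct HZ as [ -> | [ -> | -> ] ]; [left|right;left|right;right]; auto.
    + destruct (t_cross3 v w Z) as [k [hk E]]; auto. rewrite E, EZ. ring.
  - exists (g Z'). split.
    + destruct HZ' as [ -> | [ -> | -> ] ]; [left|right;left|right;right]; auto.
    + destruct (t_cross3 v w Z') as [k [hk E]]; auto. rewrite E. apply Rmult_lt_0_compat; auto.
Qed.

Lemma t_orient a b c : dot a a <= 1 -> dot b b <= 1 -> dot c c <= 1 -> 0 < cross3 a b c ->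
  0 < cross3 (g a) (g b) (g c).
Proof. intros ha hb hc h. destruct (t_cross3 a b c) as [k [hk E]]; auto. rewrite E. apply Rmult_lt_0_compat; auto. Qed.

End Transport.

Lemma Lv_in A : 1 <= A -> dot (Lv A) (Lv A) <= 1.
Proof. intros h. unfold Lv, dot; simpl. assert (0 <= (A-1)/(A+1) <= 1).
  { split; [apply Rmult_le_pos; [lra| left; apply Rinv_0_lt_compat; lra]|].
    apply Rmult_le_reg_r with (A+1); [lra|]. unfold Rdiv. rewrite Rmult_assoc, Rinv_l by lra. lra. }
  replace (- (A - 1) / (A + 1) * (- (A - 1) / (A + 1))) with ((A-1)/(A+1) * ((A-1)/(A+1))) by (field; lra). nra. Qed.
Lemma Rv_in B : 1 <= B -> dot (Rv B) (Rv B) <= 1.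
Proof. intros h. unfold Rv, dot; simpl. assert (0 <= (B-1)/(B+1) <= 1).
  { split; [apply Rmult_le_pos; [lra| left; apply Rinv_0_lt_compat; lra]|].
    apply Rmult_le_reg_r with (B+1); [lra|]. unfold Rdiv. rewrite Rmult_assoc, Rinv_l by lra. lra. }
  nra. Qed.
Lemma Tv_in A B : 1 <= A -> 1 <= B -> 1 < A * B -> dot (Tv (A*B)) (Tv (A*B)) <= 1.
Proof. intros hA hB hAB. pose proof (rho_le1 A B hAB). unfold Tv, dot; simpl. nra. Qed.

Lemma transport_rot c1 c2 c3 m A B P Q R0 :
  lorentz c1 c2 c3 m -> 0 < m -> 0 < det3 c1 c2 c3 ->
  (z3 c1)^2 + (z3 c2)^2 < (z3 c3)^2 -> 0 < z3 c3 ->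
  1 <= A -> 1 <= B -> 1 < A * B ->
  inD P -> inD Q -> inD R0 ->
  (forall Z, is_vert (gmap c1 c2 c3 (Lv A)) (gmap c1 c2 c3 (Rv B)) (gmap c1 c2 c3 (Tv (A*B))) Z <-> is_vert P Q R0 Z) ->
  rot_number_is (filled_triangle P Q R0) (2/5).
Proof.
  intros HL hm hdet hz hz3 hA hB hAB hP hQ hR Hperm.
  set (g := gmap c1 c2 c3).
  assert (u : forall u, dot (ptu u) (ptu u) <= 1) by (intros; rewrite ptu_unit; lra).
  assert (uu : forall u, dot (g (ptu u)) (g (ptu u)) = 1) by (intros; apply (t_unit c1 c2 c3 m); auto; apply ptu_unit).
  assert (hL := Lv_in A hA). assert (hRt := Rv_in B hB). assert (hT := Tv_in A B hA hB hAB).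
  assert (ST : forall a b, step_ok (ptu a) (ptu b) (Lv A) (Rv B) (Tv (A*B)) ->
     psi_rel (filled_triangle P Q R0) (g (ptu a)) (g (ptu b))).
  { intros a b Hs. apply psi_from_step; auto. eapply step_ok_perm; [exact Hperm|].
    apply t_step; auto. }
  destruct (orients A B hA hB hAB) as [o1 [o2 [o3 o4]]].
  apply (core_rot P Q R0 (g (ptu 1)) (g (ptu (-A))) (g (ptu (/(A*B)))) (g (ptu (A*B))) (g (ptu (-/B)))); auto.
  - apply ST, step0; auto.
  - apply ST, step1; auto.
  - apply ST, step2; auto.
  - apply ST, step3; auto.
  - apply ST, step4; auto.
  - apply t_orient; auto.
  - apply t_orient; auto.
  - apply t_orient; auto.
  - apply t_orient; auto.
Qed.

Definition Bq (X Y : pt) : R := (1 - dot X Y)^2 / ((1 - dot X X) * (1 - dot Y Y)).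

Lemma edist_line X Y t s : edist (padd X (pscal t (psub Y X))) (padd X (pscal s (psub Y X))) =
  Rabs (t - s) * sqrt (dot (psub Y X) (psub Y X)).
Proof.
  unfold edist. rewrite <- sqrt_Rsqr_abs.
  rewrite <- sqrt_mult_alt by apply Rle_0_sqr.
  f_equal. destruct X, Y; unfold dot, psub, padd, pscal, Rsqr; simpl. ring.
Qed.

Lemma line0 X Y : X = padd X (pscal 0 (psub Y X)).
Proof. destruct X, Y; unfold padd, pscal, psub; simpl; f_equal; ring. Qed.
Lemma line1 X Y : Y = padd X (pscal 1 (psub Y X)).
Proof. destruct X, Y; unfold padd, pscal, psub; simpl; f_equal; ring. Qed.

Lemma cosh_sq_ratio (rho : R) (d : R) : 0 < rho -> d = / 2 * Rabs (ln rho) ->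
  ((exp d + exp (- d)) / 2)^2 = (rho + 2 + / rho) / 4.
Proof.
  intros Hr Hd.
  assert (E : exp d * exp d = rho \/ exp d * exp d = / rho).
  { rewrite <- exp_plus. replace (d + d) with (Rabs (ln rho)) by (rewrite Hd; field).
    destruct (Rle_or_lt 0 (ln rho)).
    - left. rewrite Rabs_right by lra. apply exp_ln; auto.
    - right. rewrite Rabs_left by lra. rewrite exp_Ropp, exp_ln; auto. }
  rewrite exp_Ropp. assert (Hp := exp_pos d). set (e := exp d) in *.
  destruct E as [E|E].
  - rewrite <- E. field. lra.
  - assert (Er : rho = / (e*e)) by (rewrite E, Rinv_inv; auto).
    rewrite Er. field. lra.
Qed.

Lemma edist_lineX X Y t : edist (padd X (pscal t (psub Y X))) X = Rabs t * sqrt (dot (psub Y X) (psub Y X)).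
Proof.
  unfold edist. rewrite <- sqrt_Rsqr_abs. rewrite <- sqrt_mult_alt by apply Rle_0_sqr.
  f_equal. destruct X, Y; unfold dot, psub, padd, pscal, Rsqr; simpl. ring.
Qed.
Lemma edist_lineY X Y t : edist (padd X (pscal t (psub Y X))) Y = Rabs (t - 1) * sqrt (dot (psub Y X) (psub Y X)).
Proof.
  unfold edist. rewrite <- sqrt_Rsqr_abs. rewrite <- sqrt_mult_alt by apply Rle_0_sqr.
  f_equal. destruct X, Y; unfold dot, psub, padd, pscal, Rsqr; simpl. ring.
Qed.

Lemma dot_pos_neq X Y : X <> Y -> 0 < dot (psub Y X) (psub Y X).
Proof.
  destruct X as [x1 x2], Y as [y1 y2]; unfold dot, psub; simpl. intros H.
  destruct (Req_dec x1 y1); destruct (Req_dec x2 y2); subst.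
  - exfalso; auto.
  - assert (0 < (y2 - x2)^2) by (apply pow2_gt_0; lra). nra.
  - assert (0 < (y1 - x1)^2) by (apply pow2_gt_0; lra). nra.
  - assert (0 < (y1 - x1)^2) by (apply pow2_gt_0; lra). nra.
Qed.

Lemma Hxy_lemma X Y : (1 - dot X Y)^2 = (2 * dot X (psub Y X) + 2 * (dot X X - 1))^2 / 4.
Proof. destruct X, Y; unfold dot, psub; simpl. field. Qed.

Lemma dK_cosh X Y : inD X -> inD Y -> X <> Y ->
  ((exp (dK X Y) + exp (- dK X Y)) / 2)^2 = Bq X Y.
Proof.
  intros hX hY hne. unfold inD in *.
  assert (ha := dot_pos_neq X Y hne).
  set (a := dot (psub Y X) (psub Y X)) in *.
  set (b := 2 * dot X (psub Y X)).
  set (c := dot X X - 1).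
  assert (habc : a + b + c = dot Y Y - 1).
  { unfold a, b, c. destruct X, Y; unfold dot, psub; simpl. ring. }
  assert (hD : 0 < b * b - 4 * a * c) by (unfold c; nra).
  set (r := sqrt (b * b - 4 * a * c)).
  assert (hr : r * r = b * b - 4 * a * c) by (apply sqrt_sqrt; lra).
  assert (hr0 : 0 < r) by (apply sqrt_lt_R0; lra).
  set (t1 := (- b + -1 * r) / (2 * a)). set (t2 := (- b + 1 * r) / (2 * a)).
  assert (Hv1 : v1 X Y = padd X (pscal t1 (psub Y X))) by reflexivity.
  assert (Hv2 : v2 X Y = padd X (pscal t2 (psub Y X))) by reflexivity.
  assert (rb : Rabs b < r).
  { 
    assert (b*b < r*r) by (unfold c in *; nra).
    apply Rabs_def1; nra. }
  assert (r2 : 2*a + b < r).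
  { destruct (Rlt_or_le (2*a+b) 0); [lra|]. assert ((2*a+b)*(2*a+b) < r*r) by nra. nra. }
  assert (ht1 : t1 < 0).
  { unfold t1. apply Rabs_def2 in rb. unfold Rdiv. assert (0 < /(2*a)) by (apply Rinv_0_lt_compat; lra). nra. }
  assert (ht2 : 1 < t2).
  { unfold t2. apply Rmult_lt_reg_r with (2*a); [lra|]. unfold Rdiv. rewrite Rmult_assoc, Rinv_l by lra. lra. }
  unfold dK. rewrite Hv1, Hv2, !edist_lineX, !edist_lineY.
  fold a. set (sa := sqrt a).
  assert (hsa : 0 < sa) by (apply sqrt_lt_R0; lra).
  rewrite (Rabs_left t1), (Rabs_left (t1 - 1)), (Rabs_right t2), (Rabs_right (t2 - 1)) by lra.
  rewrite (cosh_sq_ratio ((1 - t1) * t2 / (- t1 * (t2 - 1)))).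
  - unfold Bq. clearbody r. unfold t1, t2 in *. clear Hv1 Hv2 sa hsa.
    assert (hc : c < 0) by (unfold c; lra).
    assert (hY' : dot Y Y - 1 < 0) by lra.
    assert (Hx : 1 - dot X X = - c) by (unfold c; ring).
    assert (Hy : 1 - dot Y Y = - (a + b + c)) by lra.
    assert (Hxy : (1 - dot X Y)^2 = (b + 2 * c)^2/4).
    { unfold a, b, c. apply Hxy_lemma. }
    rewrite Hx, Hy, Hxy. clearbody a b c. clear habc hX hY Hx Hy Hxy.
    field_simplify_eq; [nsat | repeat split; nra].
  - apply Rdiv_lt_0_compat; nra.
  - f_equal. f_equal. f_equal. field. repeat split; nra.
Qed.

Lemma Bq_min R0 S d u : inD R0 -> inD S -> inD (padd S (pscal u d)) ->
  klein_metric S d (psub R0 S) = 0 -> Bq R0 S <= Bq R0 (padd S (pscal u d)).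
Proof.
  unfold inD. intros hR hS hS' Hp.
  assert (hC0 : 0 < 1 - dot S S) by lra.
  assert (Hperp : (1 - dot S S) * dot d R0 - dot d S * (1 - dot S R0) = 0).
  { unfold klein_metric in Hp.
    assert (E : (1 - dot S S) * dot d R0 - dot d S * (1 - dot S R0) =
       (1 - dot S S) * (1 - dot S S) * (dot d (psub R0 S) / (1 - dot S S) +
        dot S d * dot S (psub R0 S) / ((1 - dot S S) * (1 - dot S S)))).
    { destruct S, d, R0; unfold dot, psub; simpl. field. unfold dot in hC0; simpl in hC0; lra. }
    rewrite E, Hp. ring. }
  set (S' := padd S (pscal u d)) in *.
  assert (E : Bq R0 S' - Bq R0 S = u*u*((dot R0 d)^2*(1 - dot S S) + (1 - dot R0 S)^2*dot d d) /
      ((1 - dot R0 R0) * (1 - dot S S) * (1 - dot S' S'))).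
  { unfold Bq, S'. revert Hperp hC0 hS' hR. destruct S as [s1 s2], d as [e1 e2], R0 as [r1 r2].
    unfold dot, padd, pscal; simpl. intros. field_simplify_eq; [nsat| repeat split; lra]. }
  assert (0 <= u*u*((dot R0 d)^2*(1 - dot S S) + (1 - dot R0 S)^2*dot d d) /
      ((1 - dot R0 R0) * (1 - dot S S) * (1 - dot S' S'))).
  { apply Rmult_le_pos.
    - apply Rmult_le_pos; [nra|]. apply Rplus_le_le_0_compat.
      + apply Rmult_le_pos; [apply pow2_ge_0|lra].
      + apply Rmult_le_pos; [apply pow2_ge_0|]. destruct d; unfold dot; simpl; nra.
    - left. apply Rinv_0_lt_compat. apply Rmult_lt_0_compat; [apply Rmult_lt_0_compat|]; lra. }
  lra.
Qed.

Lemma cosh_le x y : 0 <= x -> 0 <= y ->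
  ((exp x + exp (- x)) / 2)^2 <= ((exp y + exp (- y)) / 2)^2 -> x <= y.
Proof.
  intros hx hy H. destruct (Rle_or_lt x y) as [h|h]; auto. exfalso.
  assert (e1 : exp y < exp x) by (apply exp_increasing; auto).
  assert (e2 : exp (- x) * exp (- y) < 1).
  { rewrite <- exp_plus. rewrite <- exp_0. apply exp_increasing. lra. }
  assert (f : exp y + exp (- y) < exp x + exp (- x)).
  { assert (exp (-x) = exp (-x) * exp (-y) * exp y).
    { rewrite Rmult_assoc, <- exp_plus. replace (- y + y) with 0 by ring. rewrite exp_0. ring. }
    assert (exp (-y) = exp (-x) * exp (-y) * exp x).
    { rewrite (Rmult_comm (exp (-x))), Rmult_assoc, <- exp_plus. replace (- x + x) with 0 by ring. rewrite exp_0. ring. }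
    pose proof (exp_pos x). pose proof (exp_pos y). pose proof (exp_pos (-x)). pose proof (exp_pos (-y)).
    nra. }
  pose proof (exp_pos y). pose proof (exp_pos (-y)). nra.
Qed.

Lemma dK_nonneg X Y : 0 <= dK X Y.
Proof. unfold dK. apply Rmult_le_pos; [lra| apply Rabs_pos]. Qed.

Lemma Bq_gt1 P Q : inD P -> inD Q -> P <> Q -> 1 < Bq P Q.
Proof.
  unfold inD, Bq. intros hP hQ hne. pose proof (dot_pos_neq P Q hne) as hd.
  revert hP hQ hd. destruct P as [p1 p2], Q as [q1 q2]. unfold dot, psub; simpl. intros.
  assert (E : (1 - (p1*q1 + p2*q2))^2 - (1 - (p1*p1+p2*p2))*(1 - (q1*q1+q2*q2)) =
     ((q1-p1)*(q1-p1) + (q2-p2)*(q2-p2)) - (p1*(q2-p2) - p2*(q1-p1))^2) by ring.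
  assert (C : (p1*(q2-p2) - p2*(q1-p1))^2 <= (p1*p1+p2*p2) * ((q1-p1)*(q1-p1) + (q2-p2)*(q2-p2))).
  { assert (0 <= (p1*(q1-p1) + p2*(q2-p2))^2) by apply pow2_ge_0. nra. }
  assert (0 < (1 - (p1*p1+p2*p2))*(1 - (q1*q1+q2*q2))) by (apply Rmult_lt_0_compat; lra).
  apply Rmult_lt_reg_r with ((1 - (p1*p1+p2*p2))*(1 - (q1*q1+q2*q2))); auto.
  unfold Rdiv. rewrite Rmult_assoc, Rinv_l by lra. nra.
Qed.

Lemma Delta_relation P Q R0 S : inD P -> inD Q -> P <> Q -> inD R0 -> inD S -> R0 <> S ->
  dK R0 S = DeltaK 2 P Q ->
  Bq R0 S = (2 * Bq P Q - 1)^2 / ((2 * Bq P Q - 1)^2 - 1).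
Proof.
  intros hP hQ hne hR hS hRS HD.
  rewrite <- (dK_cosh R0 S), <- (dK_cosh P Q) by auto.
  pose proof (Bq_gt1 P Q hP hQ hne) as hB. rewrite <- (dK_cosh P Q) in hB by auto.
  set (d := dK P Q) in *. assert (hd := dK_nonneg P Q). fold d in hd.
  assert (hd0 : 0 < d).
  { destruct hd as [h|h]; auto. rewrite <- h in hB. rewrite Ropp_0, exp_0 in hB. lra. }
  assert (hE : 1 < exp d) by (rewrite <- exp_0; apply exp_increasing; auto).
  set (E := exp d) in *.
  assert (hEm : exp (- d) = / E) by (apply exp_Ropp).
  rewrite hEm in *.
  unfold DeltaK in HD. fold d in HD.
  replace (INR 2 * d) with (d + d) in HD by (simpl; ring). rewrite exp_plus in HD. fold E in HD.
  assert (hK : 0 < (E*E+1)/(E*E-1)) by (apply Rdiv_lt_0_compat; nra).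
  assert (eK : exp (dK R0 S) = (E*E+1)/(E*E-1)) by (rewrite HD, exp_ln; auto).
  rewrite exp_Ropp, eK.
  assert (E4 : ((E * E + 1) ^ 2 - E ^ 2 * 2) ^ 2 - E ^ 4 * 4 = (E^4 - 1)^2) by ring.
  assert (E2 : 1 < E*E) by nra.
  assert (E41 : 1 < E^4) by (replace (E^4) with ((E*E)*(E*E)) by ring; nra).
  assert (0 < (E^4 - 1)^2) by (apply pow2_gt_0; lra).
  field_simplify_eq; try (repeat split; nra).

Qed.

Lemma r_solve A B r : 1 <= A -> 1 <= B -> 1 < A * B -> 0 < r ->
  let c := (1 + (A*B)*(A*B)) / (2*(A*B)) in
  / (1 - r*r) = c*c / (c*c - 1) -> r = 2*(A*B)/(1+(A*B)*(A*B)).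
Proof.
  intros hA hB hAB hr c H.
  set (C := A*B) in *.
  assert (hc : 1 < c).
  { unfold c. apply Rmult_lt_reg_r with (2*C); [lra|]. unfold Rdiv. rewrite Rmult_assoc, Rinv_l by lra.
    assert (0 < (C-1)^2) by (apply pow2_gt_0; lra). nra. }
  assert (hcc : 0 < c*c - 1) by nra.
  assert (hpos : 0 < c*c/(c*c-1)) by (apply Rdiv_lt_0_compat; nra).
  assert (hr1 : 1 - r*r <> 0).
  { intro e. rewrite e, Rinv_0 in H. lra. }
  assert (E : c*c*(r*r) = 1).
  { apply (f_equal Rinv) in H. rewrite Rinv_inv in H.
    assert (H2 : 1 - r*r = (c*c-1)/(c*c)) by (rewrite H; field; split; nra).
    apply (Rmult_eq_compat_l (c*c)) in H2. field_simplify in H2; [|nra]. nra. }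
  assert (E2 : c * r = 1).
  { assert ((c*r - 1)*(c*r+1) = 0) by nra. apply Rmult_integral in H0. destruct H0; nra. }
  unfold c in E2. apply (Rmult_eq_reg_l ((1 + C*C)/(2*C))).
  - rewrite E2. field. split; nra.
  - apply Rgt_not_eq. apply Rdiv_lt_0_compat; nra.
Qed.

Lemma norm_final c1 c2 c3 m P Q R0 l q r :
  lorentz c1 c2 c3 m -> 0 < m -> 0 < det3 c1 c2 c3 ->
  (z3 c1)^2 + (z3 c2)^2 < (z3 c3)^2 -> 0 < z3 c3 ->
  inD P -> inD Q -> inD R0 ->
  -1 < l <= 0 -> 0 <= q < 1 -> l < q -> 0 < r ->
  / (1 - r*r) = (2 * Bq (l,0) (q,0) - 1)^2 / ((2 * Bq (l,0) (q,0) - 1)^2 - 1) ->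
  (forall Z, is_vert (gmap c1 c2 c3 (l,0)) (gmap c1 c2 c3 (q,0)) (gmap c1 c2 c3 (0,r)) Z <-> is_vert P Q R0 Z) ->
  rot_number_is (filled_triangle P Q R0) (2/5).
Proof.
  intros HL hm hdet hz hz3 hP hQ hR hl hq hlq hr Hrel Hperm.
  set (A := (1-l)/(1+l)). set (B := (1+q)/(1-q)).
  assert (hA : 1 <= A).
  { unfold A. apply Rmult_le_reg_r with (1+l); [lra|]. unfold Rdiv. rewrite Rmult_assoc, Rinv_l by lra. lra. }
  assert (hB : 1 <= B).
  { unfold B. apply Rmult_le_reg_r with (1-q); [lra|]. unfold Rdiv. rewrite Rmult_assoc, Rinv_l by lra. lra. }
  assert (hAB : 1 < A * B).
  { destruct (Req_dec l 0) as [e|e].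
    - assert (1 < B).
      { unfold B. apply Rmult_lt_reg_r with (1-q); [lra|]. unfold Rdiv. rewrite Rmult_assoc, Rinv_l by lra. lra. }
      nra.
    - assert (1 < A).
      { unfold A. apply Rmult_lt_reg_r with (1+l); [lra|]. unfold Rdiv. rewrite Rmult_assoc, Rinv_l by lra. lra. }
      nra. }
  assert (EL : Lv A = (l, 0)) by (unfold Lv, A; f_equal; field; lra).
  assert (ER : Rv B = (q, 0)) by (unfold Rv, B; f_equal; field; lra).
  assert (ET : Tv (A*B) = (0, r)).
  { unfold Tv. f_equal. symmetry. apply r_solve; auto. rewrite Hrel. f_equal.
    - f_equal. unfold Bq, dot, A, B; simpl. field. repeat split; nra.
    - f_equal. f_equal. unfold Bq, dot, A, B; simpl. field. repeat split; nra. }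
  apply (transport_rot c1 c2 c3 m A B); auto.
  rewrite EL, ER, ET. auto.
Qed.

Lemma lin3_scale c1 c2 c3 a b e k : lin3 c1 c2 c3 (k*a) (k*b) (k*e) =
  (k * x3 (lin3 c1 c2 c3 a b e), k * y3 (lin3 c1 c2 c3 a b e), k * z3 (lin3 c1 c2 c3 a b e)).
Proof. unfold lin3, x3, y3, z3; simpl. f_equal; [f_equal|]; ring. Qed.


Lemma l3_val kK S X : ldot (mkc3 kK S) (hom X) = kK * (dot S X - 1).
Proof. destruct S, X; unfold ldot, mkc3, hom, dot, x3, y3, z3; simpl. ring. Qed.

Lemma l1_line sg S d lam : ldot (mkc1 sg S d) (hom (padd S (pscal lam d))) = sg * lam * Kof S d.
Proof. unfold Kof, C0of. destruct S, d; unfold ldot, mkc1, hom, dot, padd, pscal, x3, y3, z3; simpl. ring. Qed.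

Lemma l2_line sg k0 S d lam : ldot (mkc2 sg k0 S d) (hom (padd S (pscal lam d))) = 0.
Proof. destruct S, d; unfold ldot, mkc2, hom, dot, padd, pscal, x3, y3, z3; simpl. ring. Qed.

Lemma l2_R sg k0 S d R0 : ldot (mkc2 sg k0 S d) (hom R0) = sg * k0 * cross d (psub R0 S).
Proof. destruct S, d, R0; unfold ldot, mkc2, hom, cross, psub, x3, y3, z3; simpl. ring. Qed.

Lemma l1_R sg S d R0 : inD S -> klein_metric S d (psub R0 S) = 0 -> ldot (mkc1 sg S d) (hom R0) = 0.
Proof.
  unfold inD. intros hS Hp. unfold klein_metric in Hp.
  assert (hC0 : 0 < 1 - dot S S) by lra.
  assert (E : ldot (mkc1 sg S d) (hom R0) = sg * (1 - dot S S) * (1 - dot S S) * (dot d (psub R0 S) / (1 - dot S S) +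
        dot S d * dot S (psub R0 S) / ((1 - dot S S) * (1 - dot S S)))).
  { revert hC0. destruct S, d, R0; unfold ldot, mkc1, hom, dot, psub, x3, y3, z3; simpl. intros. field. lra. }
  rewrite E, Hp. ring.
Qed.


Lemma pre_props c1 c2 c3 m X :
  lin3 c1 c2 c3 (ldot c1 (hom X)) (ldot c2 (hom X)) (- ldot c3 (hom X)) = (m * fst X, m * snd X, m) ->
  ldot c3 (hom X) < 0 -> 0 < m ->
  gmap c1 c2 c3 (prei c1 c2 c3 X) = X /\ gden c1 c2 c3 (prei c1 c2 c3 X) = - m / ldot c3 (hom X).
Proof.
  intros Ex h hm.
  set (l1 := ldot c1 (hom X)) in *. set (l2 := ldot c2 (hom X)) in *. set (l3 := ldot c3 (hom X)) in *.
  assert (Hp : lin3 c1 c2 c3 (fst (prei c1 c2 c3 X)) (snd (prei c1 c2 c3 X)) 1 =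
     lin3 c1 c2 c3 ((- / l3) * l1) ((- / l3) * l2) ((- / l3) * (- l3))).
  { unfold prei; simpl. fold l1 l2 l3. f_equal; field; lra. }
  assert (Gd : gden c1 c2 c3 (prei c1 c2 c3 X) = z3 (lin3 c1 c2 c3 (fst (prei c1 c2 c3 X)) (snd (prei c1 c2 c3 X)) 1)).
  { unfold gden, lin3, z3; simpl. ring. }
  rewrite lin3_scale, Ex in Hp.
  split.
  - unfold gmap. cbv zeta. rewrite Hp. destruct X as [x y]. unfold x3, y3, z3; simpl.
    f_equal; field; split; lra.
  - rewrite Gd, Hp. unfold z3; simpl. field. lra.
Qed.

Lemma Bq_inv c1 c2 c3 m X Y : lorentz c1 c2 c3 m -> m <> 0 ->
  gden c1 c2 c3 X <> 0 -> gden c1 c2 c3 Y <> 0 -> 1 - dot X X <> 0 -> 1 - dot Y Y <> 0 ->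
  Bq (gmap c1 c2 c3 X) (gmap c1 c2 c3 Y) = Bq X Y.
Proof.
  intros HL hm hX hY h1 h2. unfold Bq.
  rewrite (g_dot c1 c2 c3 m HL X Y hX hY).
  assert (E1 : 1 - dot (gmap c1 c2 c3 X) (gmap c1 c2 c3 X) = m * (1 - dot X X) / (gden c1 c2 c3 X)^2).
  { pose proof (g_norm c1 c2 c3 m HL X hX). replace (m * (1 - dot X X) / gden c1 c2 c3 X ^ 2) with (- (m * (dot X X - 1) / gden c1 c2 c3 X ^ 2)) by (field; auto). lra. }
  assert (E2 : 1 - dot (gmap c1 c2 c3 Y) (gmap c1 c2 c3 Y) = m * (1 - dot Y Y) / (gden c1 c2 c3 Y)^2).
  { pose proof (g_norm c1 c2 c3 m HL Y hY). replace (m * (1 - dot Y Y) / gden c1 c2 c3 Y ^ 2) with (- (m * (dot Y Y - 1) / gden c1 c2 c3 Y ^ 2)) by (field; auto). lra. }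
  rewrite E1, E2. field. repeat split; auto.
Qed.

Lemma in_pre c1 c2 c3 m X : lorentz c1 c2 c3 m -> 0 < m -> inD X ->
  gmap c1 c2 c3 (prei c1 c2 c3 X) = X -> gden c1 c2 c3 (prei c1 c2 c3 X) <> 0 ->
  inD (prei c1 c2 c3 X).
Proof.
  intros HL hm hX Eg hd. unfold inD in *.
  pose proof (g_norm c1 c2 c3 m HL _ hd) as N. rewrite Eg in N.
  set (Y := prei c1 c2 c3 X) in *. set (e := gden c1 c2 c3 Y) in *.
  assert (0 < e^2) by (apply pow2_gt_0; auto).
  assert (E : dot Y Y - 1 = (dot X X - 1) * e^2 / m) by (rewrite N; field; split; lra).
  assert ((dot X X - 1) * e^2 / m < 0).
  { unfold Rdiv. assert (0 < / m) by (apply Rinv_0_lt_compat; auto). assert ((dot X X - 1) * e^2 < 0) by nra. nra. }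
  lra.
Qed.

Lemma not_on_line P Q R0 tau : ~ collinear P Q R0 -> R0 <> padd P (pscal tau (psub Q P)).
Proof.
  intros hnc E. apply hnc. unfold collinear. rewrite E. destruct P, Q; unfold cross, psub, padd, pscal; simpl. ring.
Qed.

Lemma delta_at_S P Q R0 S t : inD P -> inD Q -> inD R0 -> ~ collinear P Q R0 -> inD S ->
  S = padd P (pscal t (psub Q P)) ->
  klein_metric S (psub Q P) (psub R0 S) = 0 ->
  delta_is P Q R0 (DeltaK 2 P Q) -> dK R0 S = DeltaK 2 P Q.
Proof.
  intros hP hQ hR hnc hS ES Hp [[S' [[hS' [t' ES']] E']] Hmin].
  assert (H1 : DeltaK 2 P Q <= dK R0 S) by (apply Hmin; split; [auto| exists t; auto]).
  assert (hRS : R0 <> S) by (rewrite ES; apply not_on_line; auto).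
  assert (hRS' : R0 <> S') by (rewrite ES'; apply not_on_line; auto).
  assert (ES2 : S' = padd S (pscal (t' - t) (psub Q P))).
  { rewrite ES', ES. destruct P, Q; unfold padd, pscal, psub; simpl. f_equal; ring. }
  assert (Hb : Bq R0 S <= Bq R0 S').
  { rewrite ES2. apply Bq_min; auto. rewrite <- ES2. auto. }
  assert (dK R0 S <= dK R0 S').
  { apply cosh_le; try apply dK_nonneg. rewrite !dK_cosh; auto. }
  lra.
Qed.

Theorem lemma4p6 (P Q R0 S : pt) :
  inD P -> inD Q -> inD R0 -> ~ collinear P Q R0 ->
  on_chord P Q S -> perp_at P Q R0 S ->
  delta_is P Q R0 (DeltaK 2 P Q) ->
  on_segment P Q S ->
  rot_number_is (filled_triangle P Q R0) (2 / 5).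
Proof.
  intros hP hQ hR hnc [hS _] [hRS hperp] hdelta [t [ht ES]].
  assert (hPQ : P <> Q).
  { intro e. apply hnc. unfold collinear. rewrite e. destruct Q; unfold cross, psub; simpl. ring. }
  assert (HD := delta_at_S P Q R0 S t hP hQ hR hnc hS ES hperp hdelta).
  assert (HB := Delta_relation P Q R0 S hP hQ hPQ hR hS (not_eq_sym hRS) HD).
  set (d := psub Q P) in *.
  assert (hd : 0 < dot d d) by (apply dot_pos_neq; auto).
  assert (hC0 : 0 < C0of S) by (unfold C0of; unfold inD in hS; lra).
  assert (hK : 0 < Kof S d).
  { unfold Kof. assert (0 <= (dot d S)^2) by apply pow2_ge_0. assert (0 < C0of S * dot d d) by nra. lra. }
  set (k0 := sqrt (C0of S)). set (kK := sqrt (Kof S d)).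
  assert (Hk0 : k0 * k0 = C0of S) by (apply sqrt_sqrt; lra).
  assert (HkK : kK * kK = Kof S d) by (apply sqrt_sqrt; lra).
  assert (hk0 : 0 < k0) by (apply sqrt_lt_R0; lra).
  assert (hkK : 0 < kK) by (apply sqrt_lt_R0; lra).
  set (nR := cross d (psub R0 S)).
  assert (hnR : nR <> 0).
  { intro e. apply hnc. unfold collinear. fold d. unfold nR in e. rewrite ES in e.
    revert e. destruct P, Q, R0; unfold d, cross, psub, padd, pscal; simpl. intros e. nra. }
  set (sg := if Rlt_dec 0 nR then 1 else -1).
  assert (Hsg : sg * sg = 1) by (unfold sg; destruct (Rlt_dec 0 nR); ring).
  assert (HsgR : 0 < sg * nR) by (unfold sg; destruct (Rlt_dec 0 nR); lra).
  set (c1 := mkc1 sg S d). set (c2 := mkc2 sg k0 S d). set (c3 := mkc3 kK S).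
  set (m := C0of S * Kof S d).
  assert (hm : 0 < m) by (apply Rmult_lt_0_compat; auto).
  assert (HL : lorentz c1 c2 c3 m) by (apply mk_lorentz; auto).
  assert (hdet : 0 < det3 c1 c2 c3).
  { unfold c1, c2, c3. rewrite mk_det by auto. repeat apply Rmult_lt_0_compat; auto. }
  assert (hz3 : 0 < z3 c3) by (unfold c3, mkc3, z3; simpl; auto).
  assert (hz : (z3 c1)^2 + (z3 c2)^2 < (z3 c3)^2).
  { change (z3 c1) with (sg * dot d S). change (z3 c2) with (sg*k0*(- snd d * fst S + fst d * snd S)).
    change (z3 c3) with kK.
    replace ((kK)^2) with (Kof S d) by (rewrite <- HkK; ring).
    replace ((sg * dot d S)^2) with ((dot d S)^2) by (rewrite <- (Rmult_1_l ((dot d S)^2)), <- Hsg at 1; ring).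
    replace ((sg * k0 * (- snd d * fst S + fst d * snd S))^2) with (C0of S * (- snd d * fst S + fst d * snd S)^2)
      by (rewrite <- Hk0, <- (Rmult_1_l (k0*k0)), <- Hsg; ring).
    unfold Kof. assert (hS' := hS). unfold inD in hS'.
    assert ((- snd d * fst S + fst d * snd S)^2 < dot d d).
    { revert hS' hd. destruct d as [e1 e2], S as [s1 s2]; unfold dot; simpl. intros.
      assert ((- e2 * s1 + e1 * s2)^2 + (e1*s1 + e2*s2)^2 = (e1*e1+e2*e2)*(s1*s1+s2*s2)) by ring.
      assert (0 <= (e1*s1 + e2*s2)^2) by apply pow2_ge_0. nra. }
    assert (0 < C0of S * (dot d d - (- snd d * fst S + fst d * snd S)^2)) by (apply Rmult_lt_0_compat; lra).
    lra. }
  assert (EP : P = padd S (pscal (- t) d)).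
  { rewrite ES. unfold d. destruct P, Q; unfold padd, pscal, psub; simpl. f_equal; ring. }
  assert (EQ : Q = padd S (pscal (1 - t) d)).
  { rewrite ES. unfold d. destruct P, Q; unfold padd, pscal, psub; simpl. f_equal; ring. }
  assert (ES0 : S = padd S (pscal 0 d)).
  { destruct S, d; unfold padd, pscal; simpl. f_equal; ring. }
  assert (L3 : forall X, inD X -> ldot c3 (hom X) < 0).
  { intros X hX. unfold c3. rewrite l3_val. 
    assert (dot S X < 1).
    { unfold inD in *. revert hS hX. destruct S as [s1 s2], X as [x1 x2]; unfold dot; simpl; intros.
      assert (0 <= (s1*x2 - s2*x1)^2) by apply pow2_ge_0.
      assert ((s1*x1+s2*x2)^2 + (s1*x2 - s2*x1)^2 = (s1*s1+s2*s2)*(x1*x1+x2*x2)) by ring.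
      assert ((s1*s1+s2*s2)*(x1*x1+x2*x2) < 1).
      { assert (0 <= s1*s1+s2*s2) by nra. assert (0 <= x1*x1+x2*x2) by nra. nra. }
      nra. }
    nra. }
  assert (PR : forall X, inD X -> gmap c1 c2 c3 (prei c1 c2 c3 X) = X /\
                 gden c1 c2 c3 (prei c1 c2 c3 X) = - m / ldot c3 (hom X)).
  { intros X hX. apply pre_props; auto. apply mk_expand; auto. }
  assert (DP : forall X, inD X -> 0 < gden c1 c2 c3 (prei c1 c2 c3 X)).
  { intros X hX. destruct (PR X hX) as [_ ->]. pose proof (L3 X hX).
    replace (- m / ldot c3 (hom X)) with (m / (- ldot c3 (hom X))) by (field; lra).
    apply Rdiv_lt_0_compat; lra. }
  assert (IN : forall X, inD X -> inD (prei c1 c2 c3 X)).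
  { intros X hX. destruct (PR X hX) as [g1 _]. apply (in_pre c1 c2 c3 m); auto.
    pose proof (DP X hX). lra. }
  assert (l2P : ldot c2 (hom P) = 0) by (rewrite EP; apply l2_line).
  assert (l2Q : ldot c2 (hom Q) = 0) by (rewrite EQ; apply l2_line).
  assert (l2S : ldot c2 (hom S) = 0) by (rewrite ES0; apply l2_line).
  assert (l1P : ldot c1 (hom P) = sg * (- t) * Kof S d) by (rewrite EP; apply l1_line).
  assert (l1Q : ldot c1 (hom Q) = sg * (1 - t) * Kof S d) by (rewrite EQ; apply l1_line).
  assert (l1S : ldot c1 (hom S) = 0) by (rewrite ES0; unfold c1; rewrite l1_line; ring).
  assert (l1R : ldot c1 (hom R0) = 0) by (apply l1_R; auto).
  assert (l2R : ldot c2 (hom R0) = sg * k0 * nR) by (apply l2_R).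
  set (p := fst (prei c1 c2 c3 P)). set (q := fst (prei c1 c2 c3 Q)). set (r := snd (prei c1 c2 c3 R0)).
  assert (EPh : prei c1 c2 c3 P = (p, 0)).
  { unfold p. unfold prei. simpl. rewrite l2P. f_equal. unfold Rdiv. ring. }
  assert (EQh : prei c1 c2 c3 Q = (q, 0)).
  { unfold q. unfold prei. simpl. rewrite l2Q. f_equal. unfold Rdiv. ring. }
  assert (ERh : prei c1 c2 c3 R0 = (0, r)).
  { unfold r. unfold prei. simpl. rewrite l1R. f_equal. unfold Rdiv. ring. }
  assert (ESh : prei c1 c2 c3 S = (0, 0)).
  { unfold prei. rewrite l1S, l2S. f_equal; unfold Rdiv; ring. }
  assert (pv : p = - (sg * (- t) * Kof S d) / ldot c3 (hom P)) by (unfold p, prei; simpl; rewrite l1P; auto).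
  assert (qv : q = - (sg * (1 - t) * Kof S d) / ldot c3 (hom Q)) by (unfold q, prei; simpl; rewrite l1Q; auto).
  assert (rv : r = - (sg * k0 * nR) / ldot c3 (hom R0)) by (unfold r, prei; simpl; rewrite l2R; auto).
  pose proof (L3 P hP) as l3P. pose proof (L3 Q hQ) as l3Q. pose proof (L3 R0 hR) as l3R.
  destruct (PR P hP) as [gP _]. destruct (PR Q hQ) as [gQ _]. destruct (PR R0 hR) as [gR _].
  destruct (PR S hS) as [gS _].
  rewrite EPh in gP. rewrite EQh in gQ. rewrite ERh in gR. rewrite ESh in gS.
  assert (iP := IN P hP). assert (iQ := IN Q hQ). assert (iR := IN R0 hR). assert (iS := IN S hS).
  rewrite EPh in iP. rewrite EQh in iQ. rewrite ERh in iR. rewrite ESh in iS.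
  assert (dP' := DP P hP). assert (dQ' := DP Q hQ). assert (dR' := DP R0 hR). assert (dS' := DP S hS).
  rewrite EPh in dP'. rewrite EQh in dQ'. rewrite ERh in dR'. rewrite ESh in dS'.
  unfold inD, dot in iP, iQ, iR; simpl in iP, iQ, iR.
  assert (hr : 0 < r).
  { rewrite rv. replace (- (sg * k0 * nR) / ldot c3 (hom R0)) with ((sg * nR) * k0 / (- ldot c3 (hom R0))) by (field; lra).
    apply Rdiv_lt_0_compat; [apply Rmult_lt_0_compat|]; lra. }
  assert (hpq : p <> q).
  { intro e. apply hPQ. rewrite <- gP, <- gQ, e. reflexivity. }
  assert (Hrel : / (1 - r*r) = (2 * Bq (p,0) (q,0) - 1)^2 / ((2 * Bq (p,0) (q,0) - 1)^2 - 1)).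
  { assert (B1 : Bq (gmap c1 c2 c3 (0, r)) (gmap c1 c2 c3 (0, 0)) = Bq (0, r) (0, 0)).
    { apply (Bq_inv c1 c2 c3 m); auto; try lra; unfold dot; simpl; nra. }
    assert (B2 : Bq (gmap c1 c2 c3 (p, 0)) (gmap c1 c2 c3 (q, 0)) = Bq (p, 0) (q, 0)).
    { apply (Bq_inv c1 c2 c3 m); auto; try lra; unfold dot; simpl; nra. }
    rewrite gR, gS in B1. rewrite gP, gQ in B2. rewrite <- B2, <- HB, B1.
    unfold Bq, dot; simpl. field. lra. }
  assert (Bsym : Bq (q,0) (p,0) = Bq (p,0) (q,0)).
  { unfold Bq, dot; simpl. f_equal; [ring|ring]. }
  assert (Hsg2 : (sg = 1 /\ 0 < nR) \/ (sg = -1 /\ nR < 0)).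
  { unfold sg. destruct (Rlt_dec 0 nR); [left; split; auto| right; split; auto; lra]. }
  assert (hK' := hK).
  destruct Hsg2 as [[e1 _] | [e1 _]]; rewrite e1 in pv, qv.
  - assert (hp0 : p <= 0).
    { rewrite pv. replace (- (1 * - t * Kof S d) / ldot c3 (hom P)) with (- (t * Kof S d / (- ldot c3 (hom P)))) by (field; lra).
      assert (0 <= t * Kof S d / (- ldot c3 (hom P))) by (apply Rmult_le_pos; [nra| left; apply Rinv_0_lt_compat; lra]). lra. }
    assert (hq0 : 0 <= q).
    { rewrite qv. replace (- (1 * (1 - t) * Kof S d) / ldot c3 (hom Q)) with ((1 - t) * Kof S d / (- ldot c3 (hom Q))) by (field; lra).
      apply Rmult_le_pos; [nra| left; apply Rinv_0_lt_compat; lra]. }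
    apply (norm_final c1 c2 c3 m P Q R0 p q r); auto; try (split; nra).
    + assert (p < q) by (destruct (Rtotal_order p q) as [h|[h|h]]; auto; lra). lra.
    + intro Z. rewrite gP, gQ, gR. tauto.
  - assert (hp0 : 0 <= p).
    { rewrite pv. replace (- (-1 * - t * Kof S d) / ldot c3 (hom P)) with (t * Kof S d / (- ldot c3 (hom P))) by (field; lra).
      apply Rmult_le_pos; [nra| left; apply Rinv_0_lt_compat; lra]. }
    assert (hq0 : q <= 0).
    { rewrite qv. replace (- (-1 * (1 - t) * Kof S d) / ldot c3 (hom Q)) with (- ((1 - t) * Kof S d / (- ldot c3 (hom Q)))) by (field; lra).
      assert (0 <= (1 - t) * Kof S d / (- ldot c3 (hom Q))) by (apply Rmult_le_pos; [nra| left; apply Rinv_0_lt_compat; lra]). lra. }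
    apply (norm_final c1 c2 c3 m P Q R0 q p r); auto; try (split; nra).
    + assert (q < p) by (destruct (Rtotal_order p q) as [h|[h|h]]; auto; lra). lra.
    + rewrite Bsym. auto.
    + intro Z. rewrite gP, gQ, gR. unfold is_vert. tauto.
Qed.
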